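(* Let $H={\rm SL}_q(N)$ with CQT structure $\sigma$ as in the context, and in $H^0$ put ${\bf l}_{ij}=\sigma(-,x_{ij})$, ${\bf r}_{ij}=\sigma(x_{ij},-)$. Then ${\bf l}_{ii}={\bf r}_{ii}$ is an invertible grouplike element of $H^0$. Define for $1\le i\le N$, $1\le s\le N-1$: $\widehat K_i={\bf l}_{ii}$, $E_s={\bf l}_{s+1,s+1}^{-1}{\bf l}_{s+1,s}$, $F_s=(q-q^{-1})^{-2}{\bf r}_{ss}^{-1}{\bf r}_{s,s+1}$. Then the Hopf algebra $H_l=\{\sigma(-,x)\mid x\in H\}$ is generated as an algebra by the $\widehat K_i^{\pm1}$ and the $E_s$, and these satisfy $\widehat K_i\widehat K_j=\widehat K_j\widehat K_i$, $\widehat K_i\widehat K_i^{-1}=\widehat K_i^{-1}\widehat K_i=\varepsilon$, $\widehat K_1\widehat K_2\cdots\widehat K_N=\varepsilon$, $\widehat K_iE_t\widehat K_i^{-1}=q^{\delta_{i,t}-\delta_{i,t+1}}E_t$, $E_tE_s=E_sE_t$ if $|s-t|>1$, and $E_s^2E_t-(q+q^{-1})E_sE_tE_s+E_tE_s^2=0$ if $|s-t|=1$. Similarly $H_r=\{\sigma(x,-)\mid x\in H\}$ is generated as an algebra by the $\widehat K_i^{\pm1}$ and the $F_s$, which satisfy the same relations among the $\widehat K_i$, and $\widehat K_iF_t\widehat K_i^{-1}=q^{\delta_{i,t+1}-\delta_{i,t}}F_t$, $F_tF_s=F_sF_t$ if $|s-t|>1$, $F_s^2F_t-(q+q^{-1})F_sF_tF_s+F_tF_s^2=0$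 if $|s-t|=1$.
   Context: $k$ is a field, $q\in k$ with $q\neq0$ and $q^2\neq1$, $N\ge2$, $z\in k$ with $z^N=q^{-1}$. ${\rm SL}_q(N)$ is the Hopf algebra generated by $x_{ij}$ ($1\le i,j\le N$) with relations $x_{im}x_{in}=qx_{in}x_{im}$ ($n<m$), $x_{jm}x_{im}=qx_{im}x_{jm}$ ($i<j$), $x_{jn}x_{im}=x_{im}x_{jn}$ ($i<j$, $n<m$), $x_{jm}x_{in}-x_{in}x_{jm}=(q-q^{-1})x_{im}x_{jn}$ ($i<j$, $n<m$), $\sum_{p\in S_N}(-q)^{-l(p)}x_{1p(1)}\cdots x_{Np(N)}=1$, comultiplication $\Delta(x_{ij})=\sum_kx_{ik}\otimes x_{kj}$, counit $\varepsilon(x_{ij})=\delta_{ij}$. $\sigma$ is its CQT structure (a convolution invertible skew pairing $H\otimes H\to k$ with $\sigma(hh',g)=\sigma(h,g_1)\sigma(h',g_2)$, $\sigma(g,hh')=\sigma(g_2,h)\sigma(g_1,h')$, $\sigma(1,h)=\sigma(h,1)=\varepsilon(h)$, $\sigma(h_1,h'_1)h_2h'_2=h'_1h_1\sigma(h_2,h'_2)$) determined by $\sigma(x_{im},x_{jn})=z\big(q^{\delta_{ij}}\delta_{mi}\delta_{nj}+[j>i](q-q^{-1})\delta_{mj}\delta_{ni}\big)$, $[j>i]\in\{0,1\}$ the indicator of $j>i$. $H^0$ is the finite dual; products in $H^0$ are convolution products. *)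

(* Defs.v *)
(* Encoding of SL_q(N), its CQT structure and the finite dual
   via the free algebra on generators x_ij (words = monomials basis). *)
From HB Require Import structures.
From mathcomp Require Import all_boot all_order all_algebra all_fingroup.
Set Implicit Arguments. Unset Strict Implicit. Unset Printing Implicit Defensive.
Import Order.TTheory GRing.Theory Num.Theory.
Local Open Scope ring_scope.

Fixpoint allP (T : Type) (P : T -> Prop) (s : seq T) : Prop :=
  match s with [::] => True | x :: s' => P x /\ allP P s' end.

Section Words.
Variable N : nat.
(* generator x_ij is the pair (i,j); monomials of the free algebra are words *)
Definition gen := ('I_N * 'I_N)%type.
Definition word := seq gen.

(* Delta(x_{a1 b1} ... x_{am bm}) = sum_k x_{a1 k1}..x_{am km} (x) x_{k1 b1}..x_{km bm} *)
Fixpoint delta (w : word) : seq (word * word) :=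
  match w with
  | [::] => [:: ([::], [::])]
  | a :: w' => [seq ((a.1, c) :: p.1, (c, a.2) :: p.2) | c <- enum 'I_N, p <- delta w']
  end.

Definition inv_count (p : {perm 'I_N}) : nat :=
  #|[set ij : 'I_N * 'I_N | (ij.1 < ij.2)%N && (p ij.2 < p ij.1)%N]|.
End Words.

Section Alg.
Variables (k : fieldType) (N : nat).
Local Notation word := (word N).

(* elements of the free algebra: finite formal linear combinations of words *)
Definition lincomb := seq (k * word).
(* linear functionals on the free algebra = functions on the word basis *)
Definition fn := word -> k.
(* bilinear forms on the free algebra *)
Definition bf := word -> word -> k.

Definition coef (x : lincomb) (w : word) : k := \sum_(p <- x | p.2 == w) p.1.
Definition lc_eq (x y : lincomb) : Prop := forall w, coef x w = coef y w.
Definition lscale (c : k) (x : lincomb) : lincomb := [seq (c * p.1, p.2) | p <- x].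
Definition lmul (u : word) (x : lincomb) : lincomb := [seq (p.1, u ++ p.2) | p <- x].
Definition rmul (x : lincomb) (v : word) : lincomb := [seq (p.1, p.2 ++ v) | p <- x].
Definition lcsub (x y : lincomb) : lincomb := x ++ lscale (-1) y.

(* the quantum determinant relation  sum_p (-q)^{-l(p)} x_{1p(1)}...x_{Np(N)} - 1 *)
Definition det_lc (q : k) : lincomb :=
  (-1, [::]) ::
  [seq (((- q)^-1) ^+ inv_count p, [seq (i, p i) | i <- enum 'I_N]) | p <- enum {perm 'I_N}].

(* the defining relations of SL_q(N), written as "lhs - rhs" *)
Definition is_rel (q : k) (r : lincomb) : Prop :=
     (exists i m n : 'I_N, (n < m)%N /\
        r = [:: (1, [:: (i, m); (i, n)]); (- q, [:: (i, n); (i, m)])])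
  \/ (exists i j m : 'I_N, (i < j)%N /\
        r = [:: (1, [:: (j, m); (i, m)]); (- q, [:: (i, m); (j, m)])])
  \/ (exists i j m n : 'I_N, (i < j)%N /\ (n < m)%N /\
        r = [:: (1, [:: (j, n); (i, m)]); (-1, [:: (i, m); (j, n)])])
  \/ (exists i j m n : 'I_N, (i < j)%N /\ (n < m)%N /\
        r = [:: (1, [:: (j, m); (i, n)]); (-1, [:: (i, n); (j, m)]);
                (- (q - q^-1), [:: (i, m); (j, n)])])
  \/ r = det_lc q.

(* membership in the two-sided ideal I generated by the relations;
   SL_q(N) = free algebra / I *)
Definition inI (q : k) (x : lincomb) : Prop :=
  exists t : seq (k * word * lincomb * word),
    allP (fun e => is_rel q e.1.2) t /\
    lc_eq x (flatten [seq lscale e.1.1.1 (lmul e.1.1.2 (rmul e.1.2 e.2)) | e <- t]).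

Definition fext (f : fn) (x : lincomb) : k := \sum_(p <- x) p.1 * f p.2.

(* f is a linear functional on H = SL_q(N) (i.e. vanishes on I) *)
Definition onH (q : k) (f : fn) : Prop := forall x, inI q x -> fext f x = 0.

(* J (a subset of the free algebra containing I) is a two-sided ideal;
   such J correspond exactly to ideals of H *)
Definition is_ideal (J : lincomb -> Prop) : Prop :=
  J [::] /\ (forall x y, J x -> lc_eq x y -> J y) /\
  (forall x y, J x -> J y -> J (x ++ y)) /\
  (forall c x, J x -> J (lscale c x)) /\
  (forall u x v, J x -> J (lmul u (rmul x v))).

(* f belongs to the finite dual H^0: f is a functional on H whose kernel
   contains an ideal of H of finite codimension *)
Definition finite_dual (q : k) (f : fn) : Prop :=
  onH q f /\
  exists J : lincomb -> Prop,
    is_ideal J /\ (forall x, inI q x -> J x) /\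
    (exists B : seq word, forall w, exists x : lincomb,
        allP (fun p => p.2 \in B) x /\ J (lcsub [:: (1, w)] x)) /\
    (forall x, J x -> fext f x = 0).

(* counit of H = unit of H^0 *)
Definition eps : fn := fun w => \prod_(a <- w) ((a.1 == a.2)%:R : k).
Definition conv (f g : fn) : fn := fun w => \sum_(p <- delta w) f p.1 * g p.2.
Definition convprod (fs : seq fn) : fn := foldr conv eps fs.

(* grouplike in H^0: Delta f = f (x) f and eps(f) = 1, i.e. f is multiplicative
   and unital *)
Definition grouplike (f : fn) : Prop :=
  f [::] = 1 /\ forall u v, f (u ++ v) = f u * f v.

Definition gen_by (G : fn -> Prop) (f : fn) : Prop :=
  exists t : seq (k * seq fn),
    allP (fun p => allP G p.2) t /\
    forall w, f w = \sum_(p <- t) p.1 * convprod p.2 w.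

Definition sigL (s : bf) (x : lincomb) : fn := fun w => \sum_(p <- x) p.1 * s w p.2.
Definition sigR (s : bf) (x : lincomb) : fn := fun w => \sum_(p <- x) p.1 * s p.2 w.
Definition lfun (s : bf) (i j : 'I_N) : fn := fun w => s w [:: (i, j)].
Definition rfun (s : bf) (i j : 'I_N) : fn := fun w => s [:: (i, j)] w.

(* s is a bilinear form on H (descends to the quotient in each argument) *)
Definition descends (q : k) (s : bf) : Prop :=
  (forall w, onH q (fun u => s u w)) /\ (forall w, onH q (fun u => s w u)).

Definition skew_pairing (s : bf) : Prop :=
  (forall u v w, s (u ++ v) w = \sum_(p <- delta w) s u p.1 * s v p.2) /\
  (forall u v w, s w (u ++ v) = \sum_(p <- delta w) s p.2 u * s p.1 v) /\
  (forall w, s [::] w = eps w) /\ (forall w, s w [::] = eps w).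

Definition conv2 (s t : bf) : bf := fun a b =>
  \sum_(p <- delta a) \sum_(p' <- delta b) s p.1 p'.1 * t p.2 p'.2.

Definition conv_invertible (q : k) (s : bf) : Prop :=
  exists t : bf, descends q t /\
    (forall a b, conv2 s t a b = eps a * eps b) /\
    (forall a b, conv2 t s a b = eps a * eps b).

(* sigma(h1,h'1) h2 h'2 = h'1 h1 sigma(h2,h'2) in H *)
Definition braided (q : k) (s : bf) : Prop :=
  forall a b, inI q (lcsub
     [seq (s p.1 p'.1, p.2 ++ p'.2) | p <- delta a, p' <- delta b]
     [seq (s p.2 p'.2, p'.1 ++ p.1) | p <- delta a, p' <- delta b]).

Definition sigma_gen (q z : k) (s : bf) : Prop :=
  forall i m j n : 'I_N, s [:: (i, m)] [:: (j, n)] =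
    z * (q ^+ (i == j) * ((m == i) && (n == j))%:R
         + (i < j)%N%:R * (q - q^-1) * ((m == j) && (n == i))%:R).

Definition CQT (q z : k) (s : bf) : Prop :=
  descends q s /\ skew_pairing s /\ conv_invertible q s /\ braided q s /\
  sigma_gen q z s.

End Alg.
Arguments eps {k N}.

(* Main.v *)
Require Import Defs.
From HB Require Import structures.
From mathcomp Require Import all_boot all_order all_algebra all_fingroup.
From mathcomp Require Import boolp ring zify.
Set Implicit Arguments. Unset Strict Implicit. Unset Printing Implicit Defensive.
Import Order.TTheory GRing.Theory Num.Theory.
Local Open Scope ring_scope.
Arguments delta : simpl never.

Section Dual.
Variables (k : fieldType) (N : nat).
Local Notation word := (word N).
Definition dual : Type := word -> k.
HB.instance Definition _ := Choice.on dual.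

Lemma delta_cons (a : gen N) (w : word) : delta (a :: w) =
  [seq ((a.1, c) :: p.1, (c, a.2) :: p.2) | c <- enum 'I_N, p <- delta w].
Proof. by []. Qed.

Lemma sum_delta_cons (a : gen N) (w : word) (F : word * word -> k) :
  \sum_(p <- delta (a :: w)) F p =
  \sum_(c <- enum 'I_N) \sum_(p <- delta w) F ((a.1, c) :: p.1, (c, a.2) :: p.2).
Proof. by rewrite delta_cons big_allpairs_dep. Qed.

Lemma sum_delta_nil (F : word * word -> k) : \sum_(p <- delta [::]) F p = F ([::], [::]).
Proof. by rewrite big_cons big_nil addr0. Qed.

Lemma sum_delta_cat (u v : word) (F : word * word -> k) :
  \sum_(p <- delta (u ++ v)) F p =
  \sum_(p <- delta u) \sum_(p' <- delta v) F (p.1 ++ p'.1, p.2 ++ p'.2).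
Proof.
elim: u F => [|a u IH] F; first by rewrite sum_delta_nil /=; apply: eq_bigr => -[].
rewrite cat_cons sum_delta_cons sum_delta_cons; apply: eq_bigr => c _.
by rewrite IH.
Qed.

Lemma eps_cons (a : gen N) (w : word) : @eps k N (a :: w) = (a.1 == a.2)%:R * eps w :> k.
Proof. by rewrite /eps big_cons. Qed.
Lemma eps_nil : @eps k N [::] = 1 :> k.
Proof. by rewrite /eps big_nil. Qed.

Lemma counit_l (f : word -> k) w : \sum_(p <- delta w) eps p.1 * f p.2 = f w.
Proof.
elim: w f => [|a w IH] f; first by rewrite sum_delta_nil eps_nil mul1r.
rewrite sum_delta_cons.
rewrite (bigD1_seq a.1) ?enum_uniq ?mem_enum //= [X in _ + X]big1_seq ?addr0.
  rewrite -[RHS](IH (fun x => f (a :: x))); apply: eq_bigr => p _.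
  by rewrite eps_cons eqxx mul1r /= -surjective_pairing.
move=> c /andP[ne _]; apply: big1 => p _.
by rewrite eps_cons /= eq_sym (negbTE ne) mul0r mul0r.
Qed.

Lemma counit_r (f : word -> k) w : \sum_(p <- delta w) f p.1 * eps p.2 = f w.
Proof.
elim: w f => [|a w IH] f; first by rewrite sum_delta_nil eps_nil mulr1.
rewrite sum_delta_cons.
rewrite (bigD1_seq a.2) ?enum_uniq ?mem_enum //= [X in _ + X]big1_seq ?addr0.
  rewrite -[RHS](IH (fun x => f (a :: x))); apply: eq_bigr => p _.
  by rewrite eps_cons eqxx mul1r /= -surjective_pairing.
move=> c /andP[ne _]; apply: big1 => p _.
by rewrite eps_cons /= (negbTE ne) mul0r mulr0.
Qed.

Lemma coassoc (w : word) (F : word -> word -> word -> k) :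
  \sum_(p <- delta w) \sum_(p' <- delta p.1) F p'.1 p'.2 p.2 =
  \sum_(p <- delta w) \sum_(p' <- delta p.2) F p.1 p'.1 p'.2.
Proof.
elim: w F => [|a w IH] F.
  rewrite (sum_delta_nil (fun p => \sum_(p' <- delta p.1) F p'.1 p'.2 p.2)).
  rewrite (sum_delta_nil (fun p => \sum_(p' <- delta p.2) F p.1 p'.1 p'.2)) /=.
  by rewrite !sum_delta_nil.
rewrite (sum_delta_cons _ _ (fun p => \sum_(p' <- delta p.1) F p'.1 p'.2 p.2)).
rewrite (sum_delta_cons _ _ (fun p => \sum_(p' <- delta p.2) F p.1 p'.1 p'.2)) /=.
under eq_bigr do under eq_bigr do rewrite sum_delta_cons.
under [RHS]eq_bigr do under eq_bigr do rewrite sum_delta_cons.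
rewrite /=.
under eq_bigr do rewrite exchange_big.
rewrite exchange_big.
under [RHS]eq_bigr do rewrite exchange_big.
apply: eq_bigr => d _; apply: eq_bigr => c _.
exact: (IH (fun x y z => F ((a.1, d) :: x) ((d, c) :: y) ((c, a.2) :: z))).
Qed.

Definition dzero : dual := fun _ => 0.
Definition dadd (f g : dual) : dual := fun w => f w + g w.
Definition dopp (f : dual) : dual := fun w => - f w.
Lemma daddA : associative dadd.
Proof. by move=> f g h; apply: funext => w; rewrite /dadd addrA. Qed.
Lemma daddC : commutative dadd.
Proof. by move=> f g; apply: funext => w; rewrite /dadd addrC. Qed.
Lemma dadd0 : left_id dzero dadd.
Proof. by move=> f; apply: funext => w; rewrite /dadd /dzero add0r. Qed.
Lemma daddN : left_inverse dzero dopp dadd.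
Proof. by move=> f; apply: funext => w; rewrite /dadd /dzero /dopp addNr. Qed.
HB.instance Definition _ := GRing.isZmodule.Build dual daddA daddC dadd0 daddN.

Definition dmul (f g : dual) : dual := conv f g.
Definition done : dual := eps.
Lemma dmulA : associative dmul.
Proof.
move=> f g h; apply: funext => w; rewrite /dmul /conv.
under eq_bigr do rewrite mulr_sumr.
under [RHS]eq_bigr do rewrite mulr_suml.
rewrite -(coassoc w (fun x y z => f x * (g y * h z))).
by apply: eq_bigr => p _; apply: eq_bigr => p' _; rewrite mulrA.
Qed.
Lemma dmul1 : left_id done dmul.
Proof. by move=> f; apply: funext => w; rewrite /dmul /conv counit_l. Qed.
Lemma dmulr1 : right_id done dmul.
Proof. by move=> f; apply: funext => w; rewrite /dmul /conv counit_r. Qed.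
Lemma dmulDl : left_distributive dmul dadd.
Proof.
move=> f g h; apply: funext => w; rewrite /dmul /conv /dadd -big_split.
by apply: eq_bigr => p _; rewrite mulrDl.
Qed.
Lemma dmulDr : right_distributive dmul dadd.
Proof.
move=> f g h; apply: funext => w; rewrite /dmul /conv /dadd -big_split.
by apply: eq_bigr => p _; rewrite mulrDr.
Qed.
HB.instance Definition _ := GRing.Zmodule_isPzRing.Build dual dmulA dmul1 dmulr1 dmulDl dmulDr.
Lemma done_neq0 : (1 : dual) != 0.
Proof.
apply/eqP => /(congr1 (fun f : dual => f [::])).
by rewrite /GRing.one /= /done eps_nil => /eqP; rewrite oner_eq0.
Qed.
HB.instance Definition _ := GRing.PzSemiRing_isNonZero.Build dual done_neq0.

Definition dscale (c : k) (f : dual) : dual := fun w => c * f w.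
Lemma dscaleA a b v : dscale a (dscale b v) = dscale (a * b) v.
Proof. by apply: funext => w; rewrite /dscale mulrA. Qed.
Lemma dscale1 : left_id 1 dscale.
Proof. by move=> f; apply: funext => w; rewrite /dscale mul1r. Qed.
Lemma dscaleDr : right_distributive dscale +%R.
Proof. by move=> c f g; apply: funext => w; rewrite /dscale /= /dadd mulrDr. Qed.
Lemma dscaleDl v : {morph dscale^~ v: a b / a + b}.
Proof. by move=> a b; apply: funext => w; rewrite /dscale /= /dadd mulrDl. Qed.
HB.instance Definition _ := GRing.Zmodule_isLmodule.Build k dual dscaleA dscale1 dscaleDr dscaleDl.
Lemma dscaleAl (a : k) (u v : dual) : a *: (u * v) = (a *: u) * v.
Proof.
apply: funext => w; change (a * (\sum_(p <- delta w) u p.1 * v p.2) = \sum_(p <- delta w) (a * u p.1) * v p.2); rewrite mulr_sumr.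
by apply: eq_bigr => p _; rewrite mulrA.
Qed.
HB.instance Definition _ := GRing.Lmodule_isLalgebra.Build k dual dscaleAl.
Lemma dscaleAr (a : k) (u v : dual) : a *: (u * v) = u * (a *: v).
Proof.
apply: funext => w; change (a * (\sum_(p <- delta w) u p.1 * v p.2) = \sum_(p <- delta w) u p.1 * (a * v p.2)); rewrite mulr_sumr.
by apply: eq_bigr => p _; rewrite mulrCA.
Qed.
HB.instance Definition _ := GRing.Lalgebra_isAlgebra.Build k dual dscaleAr.

Lemma dual_mulE (f g : dual) : f * g = conv f g. Proof. by []. Qed.
Lemma dual_oneE : (1 : dual) = eps. Proof. by []. Qed.
Lemma dual_addE (f g : dual) w : (f + g) w = f w + g w. Proof. by []. Qed.
Lemma dual_oppE (f : dual) w : (- f) w = - f w. Proof. by []. Qed.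
Lemma dual_zeroE w : (0 : dual) w = 0. Proof. by []. Qed.
Lemma dual_scaleE c (f : dual) w : (c *: f) w = c * f w. Proof. by []. Qed.
End Dual.

Section Chr.
Variables (k : fieldType) (N : nat).
Local Notation word := (word N).
Local Notation dual := (dual k N).

Definition chr (d : 'I_N -> k) : dual :=
  fun w => \prod_(a <- w) (d a.1 * (a.1 == a.2)%:R).

Lemma chr_nil d : chr d [::] = 1. Proof. by rewrite /chr big_nil. Qed.
Lemma chr_cons d a w : chr d (a :: w) = d a.1 * (a.1 == a.2)%:R * chr d w.
Proof. by rewrite /chr big_cons. Qed.
Lemma chr_cat d u v : chr d (u ++ v) = chr d u * chr d v.
Proof. by rewrite /chr big_cat. Qed.

Lemma chr_mul d e : chr d * chr e = chr (fun a => d a * e a).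
Proof.
apply: funext => w; rewrite dual_mulE /conv.
elim: w => [|a w IH]; first by rewrite sum_delta_nil !chr_nil mulr1.
rewrite sum_delta_cons chr_cons -IH mulr_sumr.
rewrite (bigD1_seq a.1) ?enum_uniq ?mem_enum //= [X in _ + X]big1_seq ?addr0.
  apply: eq_bigr => p _; rewrite !chr_cons /= eqxx mulr1.
  by case: eqP => [->|_]; rewrite ?eqxx /=; ring.
move=> c /andP[ne _]; apply: big1 => p _.
by rewrite !chr_cons /= eq_sym (negbTE ne) mulr0 !mul0r.
Qed.

Lemma chr_one : chr (fun _ => 1) = 1.
Proof.
apply: funext => w; rewrite dual_oneE /chr /eps.
by apply: eq_bigr => a _; rewrite mul1r.
Qed.

Lemma chr_ext d e : (forall a, d a = e a) -> chr d = chr e.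
Proof. by move=> H; apply: funext => w; apply: eq_bigr => a _; rewrite H. Qed.

Lemma chrC d e : chr d * chr e = chr e * chr d.
Proof. by rewrite !chr_mul; apply: chr_ext => a; rewrite mulrC. Qed.
End Chr.

Section Sig.
Variables (k : fieldType) (N : nat) (q z : k) (s : bf k N).
Hypothesis Hskew : skew_pairing s.
Hypothesis Hgen : sigma_gen q z s.
Local Notation word := (word N).
Local Notation dual := (dual k N).

Definition lf (i j : 'I_N) : dual := lfun s i j.
Definition rf (i j : 'I_N) : dual := rfun s i j.
Definition Kc (i : 'I_N) : dual := chr (fun a => z * q ^+ (a == i)).

Lemma sum_delta1 (i j : 'I_N) (F : word * word -> k) :
  \sum_(p <- delta [:: (i, j)]) F p = \sum_(c <- enum 'I_N) F ([:: (i, c)], [:: (c, j)]).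
Proof.
rewrite (sum_delta_cons _ _ F); apply: eq_bigr => c _.
by rewrite (sum_delta_nil (fun p => F ((i, c) :: p.1, (c, j) :: p.2))).
Qed.

Lemma lf_cat i j u v : lf i j (u ++ v) = \sum_(c <- enum 'I_N) lf i c u * lf c j v.
Proof. by rewrite /lf /lfun Hskew.1 (sum_delta1 i j (fun p => s u p.1 * s v p.2)). Qed.

Lemma rf_cat i j u v : rf i j (u ++ v) = \sum_(c <- enum 'I_N) rf c j u * rf i c v.
Proof. by rewrite /rf /rfun Hskew.2.1 (sum_delta1 i j (fun p => s p.2 u * s p.1 v)). Qed.

Lemma lf_nil i j : lf i j [::] = (i == j)%:R.
Proof. by rewrite /lf /lfun Hskew.2.2.1 eps_cons eps_nil mulr1. Qed.
Lemma rf_nil i j : rf i j [::] = (i == j)%:R.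
Proof. by rewrite /rf /rfun Hskew.2.2.2 eps_cons eps_nil mulr1. Qed.

Lemma lf_letter i j (a : gen N) : lf i j [:: a] =
  z * (q ^+ (a.1 == i) * ((a.2 == a.1) && (j == i))%:R
       + (a.1 < i)%N%:R * (q - q^-1) * ((a.2 == i) && (j == a.1))%:R).
Proof. by case: a => a b; rewrite /lf /lfun Hgen. Qed.

Lemma rf_letter i j (a : gen N) : rf i j [:: a] =
  z * (q ^+ (i == a.1) * ((j == i) && (a.2 == a.1))%:R
       + (i < a.1)%N%:R * (q - q^-1) * ((j == a.1) && (a.2 == i))%:R).
Proof. by case: a => a b; rewrite /rf /rfun Hgen. Qed.

Lemma lf_letter0 (i j : 'I_N) (a : gen N) : (i < j)%N -> lf i j [:: a] = 0.
Proof.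
move=> ij; rewrite lf_letter.
have -> : (j == i) = false by apply/negbTE; rewrite neq_ltn ij orbT.
case: (eqVneq j a.1) => [ja|nja]; last by rewrite !andbF /=; ring.
have -> : (a.1 < i)%N = false by rewrite -ja ltnNge ltnW.
by rewrite andbF /=; ring.
Qed.

Lemma rf_letter0 (i j : 'I_N) (a : gen N) : (j < i)%N -> rf i j [:: a] = 0.
Proof.
move=> ji; rewrite rf_letter.
have -> : (j == i) = false by apply/negbTE; rewrite neq_ltn ji.
case: (eqVneq j a.1) => [ja|nja]; last by rewrite ?andFb ?andbF /=; ring.
have -> : (i < a.1)%N = false by rewrite -ja ltnNge ltnW.
by rewrite andFb /=; ring.
Qed.

Lemma lf_upper (i j : 'I_N) (w : word) : (i < j)%N -> lf i j w = 0.
Proof.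
elim: w i j => [|a w IH] i j ij.
  by rewrite lf_nil; have -> : (i == j) = false by apply/negbTE; rewrite neq_ltn ij.
rewrite -cat1s lf_cat big1_seq // => c _.
case: (leqP c i) => ci; first by rewrite IH ?mulr0 // (leq_ltn_trans ci ij).
by rewrite lf_letter0 // mul0r.
Qed.

Lemma rf_lower (i j : 'I_N) (w : word) : (j < i)%N -> rf i j w = 0.
Proof.
elim: w i j => [|a w IH] i j ji.
  by rewrite rf_nil; have -> : (i == j) = false by apply/negbTE; rewrite neq_ltn ji orbT.
rewrite -cat1s rf_cat big1_seq // => c _.
case: (leqP c j) => cj; first by rewrite IH ?mulr0 // (leq_ltn_trans cj ji).
by rewrite rf_letter0 // mul0r.
Qed.

Lemma lf_diag i : lf i i = Kc i.
Proof.
apply: funext => w; elim: w => [|a w IH]; first by rewrite lf_nil eqxx /Kc chr_nil.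
rewrite -cat1s lf_cat (bigD1_seq i) ?enum_uniq ?mem_enum //= [X in _ + X]big1_seq ?addr0.
  rewrite IH /Kc chr_cons lf_letter eqxx andbT.
  congr (_ * _).
  case: (eqVneq i a.1) => [ia|nia].
    by rewrite -ia ltnn [a.2 == _]eq_sym /=; ring.
  by rewrite andbF [a.2 == _]eq_sym /=; ring.
move=> c /andP[nc _]; case: (ltngtP c i) => ci.
- by rewrite (@lf_upper c i w ci) mulr0.
- by rewrite (@lf_letter0 i c a ci) mul0r.
- by move: nc; rewrite (ord_inj ci) eqxx.
Qed.

Lemma rf_diag i : rf i i = Kc i.
Proof.
apply: funext => w; elim: w => [|a w IH]; first by rewrite rf_nil eqxx /Kc chr_nil.
rewrite -cat1s rf_cat (bigD1_seq i) ?enum_uniq ?mem_enum //= [X in _ + X]big1_seq ?addr0.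
  rewrite IH /Kc chr_cons rf_letter eqxx.
  congr (_ * _).
  case: (eqVneq i a.1) => [ia|nia].
    by rewrite -ia ltnn [a.2 == _]eq_sym /=; ring.
  by rewrite andFb [a.2 == _]eq_sym /=; ring.
move=> c /andP[nc _]; case: (ltngtP c i) => ci.
- by rewrite (@rf_lower i c w ci) mulr0.
- by rewrite (@rf_letter0 c i a ci) mul0r.
- by move: nc; rewrite (ord_inj ci) eqxx.
Qed.
End Sig.

Section Rel.
Variables (k : fieldType) (N : nat) (q z : k) (s : bf k N).
Hypothesis Hskew : skew_pairing s.
Hypothesis Hdesc : descends q s.
Local Notation word := (word N).
Local Notation dual := (dual k N).
Local Notation lf := (lf s).
Local Notation rf := (rf s).

Definition sL (u : word) : dual := fun w => s w u.
Definition sR (u : word) : dual := fun w => s u w.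

Lemma sL_cat u v : sL (u ++ v) = sL v * sL u.
Proof.
apply: funext => w; rewrite dual_mulE /conv /sL Hskew.2.1.
by apply: eq_bigr => p _; rewrite mulrC.
Qed.
Lemma sR_cat u v : sR (u ++ v) = sR u * sR v.
Proof. by apply: funext => w; rewrite dual_mulE /conv /sR Hskew.1. Qed.
Lemma sL_nil : sL [::] = 1.
Proof. by apply: funext => w; rewrite /sL Hskew.2.2.2. Qed.
Lemma sR_nil : sR [::] = 1.
Proof. by apply: funext => w; rewrite /sR Hskew.2.2.1. Qed.
Lemma sL1 i j : sL [:: (i, j)] = lf i j. Proof. by []. Qed.
Lemma sR1 i j : sR [:: (i, j)] = rf i j. Proof. by []. Qed.
Lemma sL2 a b : sL [:: a; b] = sL [:: b] * sL [:: a].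
Proof. by rewrite -sL_cat. Qed.
Lemma sR2 a b : sR [:: a; b] = sR [:: a] * sR [:: b].
Proof. by rewrite -sR_cat. Qed.

Lemma inI_rel (r : lincomb k N) : is_rel q r -> inI q r.
Proof.
move=> hr; exists [:: (1, [::], r, [::])]; split => //=.
have -> : lscale 1 (lmul [::] (rmul r [::])) = r.
  by elim: r {hr} => //= -[c w] r ->; rewrite mul1r cats0.
by rewrite cats0 => w.
Qed.

Lemma relL (r : lincomb k N) : is_rel q r -> \sum_(p <- r) p.1 *: sL p.2 = 0.
Proof.
move=> hr; apply: funext => w.
have := Hdesc.2 w r (inI_rel hr); rewrite /fext => H.
rewrite -[RHS]H; elim: r {hr H} => [|p r IH]; first by rewrite !big_nil.
by rewrite !big_cons dual_addE IH dual_scaleE.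
Qed.

Lemma relR (r : lincomb k N) : is_rel q r -> \sum_(p <- r) p.1 *: sR p.2 = 0.
Proof.
move=> hr; apply: funext => w.
have := Hdesc.1 w r (inI_rel hr); rewrite /fext => H.
rewrite -[RHS]H; elim: r {hr H} => [|p r IH]; first by rewrite !big_nil.
by rewrite !big_cons dual_addE IH dual_scaleE.
Qed.

Lemma relL1 (i m n : 'I_N) : (n < m)%N -> lf i n * lf i m = q *: (lf i m * lf i n).
Proof.
move=> nm; have := relL (r := [:: (1, [:: (i, m); (i, n)]); (- q, [:: (i, n); (i, m)])]).
rewrite !big_cons big_nil /= !sL2 !sL1 addr0 scale1r scaleNr => H.
by apply/eqP; rewrite -subr_eq0 H //; left; exists i, m, n.
Qed.

Lemma relL2 (i j m : 'I_N) : (i < j)%N -> lf i m * lf j m = q *: (lf j m * lf i m).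
Proof.
move=> ij; have := relL (r := [:: (1, [:: (j, m); (i, m)]); (- q, [:: (i, m); (j, m)])]).
rewrite !big_cons big_nil /= !sL2 !sL1 addr0 scale1r scaleNr => H.
by apply/eqP; rewrite -subr_eq0 H //; right; left; exists i, j, m.
Qed.

Lemma relL3 (i j m n : 'I_N) : (i < j)%N -> (n < m)%N -> lf i m * lf j n = lf j n * lf i m.
Proof.
move=> ij nm; have := relL (r := [:: (1, [:: (j, n); (i, m)]); (-1, [:: (i, m); (j, n)])]).
rewrite !big_cons big_nil /= !sL2 !sL1 addr0 scale1r scaleN1r => H.
by apply/eqP; rewrite -subr_eq0 H //; right; right; left; exists i, j, m, n.
Qed.

Lemma relL4 (i j m n : 'I_N) : (i < j)%N -> (n < m)%N ->
  lf i n * lf j m - lf j m * lf i n = (q - q^-1) *: (lf j n * lf i m).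
Proof.
move=> ij nm; have := relL (r := [:: (1, [:: (j, m); (i, n)]); (-1, [:: (i, n); (j, m)]);
                (- (q - q^-1), [:: (i, m); (j, n)])]).
rewrite !big_cons big_nil /= !sL2 !sL1 addr0 scale1r scaleN1r scaleNr addrA => H.
by apply/eqP; rewrite -subr_eq0 H //; right; right; right; left; exists i, j, m, n.
Qed.

Lemma relR1 (i m n : 'I_N) : (n < m)%N -> rf i m * rf i n = q *: (rf i n * rf i m).
Proof.
move=> nm; have := relR (r := [:: (1, [:: (i, m); (i, n)]); (- q, [:: (i, n); (i, m)])]).
rewrite !big_cons big_nil /= !sR2 !sR1 addr0 scale1r scaleNr => H.
by apply/eqP; rewrite -subr_eq0 H //; left; exists i, m, n.
Qed.

Lemma relR2 (i j m : 'I_N) : (i < j)%N -> rf j m * rf i m = q *: (rf i m * rf j m).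
Proof.
move=> ij; have := relR (r := [:: (1, [:: (j, m); (i, m)]); (- q, [:: (i, m); (j, m)])]).
rewrite !big_cons big_nil /= !sR2 !sR1 addr0 scale1r scaleNr => H.
by apply/eqP; rewrite -subr_eq0 H //; right; left; exists i, j, m.
Qed.

Lemma relR3 (i j m n : 'I_N) : (i < j)%N -> (n < m)%N -> rf j n * rf i m = rf i m * rf j n.
Proof.
move=> ij nm; have := relR (r := [:: (1, [:: (j, n); (i, m)]); (-1, [:: (i, m); (j, n)])]).
rewrite !big_cons big_nil /= !sR2 !sR1 addr0 scale1r scaleN1r => H.
by apply/eqP; rewrite -subr_eq0 H //; right; right; left; exists i, j, m, n.
Qed.

Lemma relR4 (i j m n : 'I_N) : (i < j)%N -> (n < m)%N ->
  rf j m * rf i n - rf i n * rf j m = (q - q^-1) *: (rf i m * rf j n).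
Proof.
move=> ij nm; have := relR (r := [:: (1, [:: (j, m); (i, n)]); (-1, [:: (i, n); (j, m)]);
                (- (q - q^-1), [:: (i, m); (j, n)])]).
rewrite !big_cons big_nil /= !sR2 !sR1 addr0 scale1r scaleN1r scaleNr addrA => H.
by apply/eqP; rewrite -subr_eq0 H //; right; right; right; left; exists i, j, m, n.
Qed.
End Rel.

Section FD.
Variables (k : fieldType) (N : nat) (q : k).
Local Notation word := (word N).

Lemma sum_pred1_uniq (S : seq word) (x : word) (g : k) :
  uniq S -> x \in S -> \sum_(w <- S | x == w) g = g.
Proof.
move=> uS xS; rewrite -big_filter.
have -> : [seq w <- S | x == w] = [:: x].
  by rewrite -(filter_pred1_uniq uS xS); apply: eq_filter => w; rewrite eq_sym.
by rewrite big_seq1.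
Qed.

Lemma fext_coef (f : word -> k) (x : lincomb k N) (S : seq word) :
  uniq S -> {subset [seq p.2 | p <- x] <= S} ->
  fext f x = \sum_(w <- S) coef x w * f w.
Proof.
move=> uS sub; rewrite /fext /coef.
under [RHS]eq_bigr do rewrite mulr_suml.
rewrite (exchange_big_dep predT) //=.
apply: eq_big_seq => p px.
rewrite (eq_bigr (fun _ => p.1 * f p.2)); last by move=> w /eqP ->.
rewrite (@sum_pred1_uniq S p.2 (p.1 * f p.2) uS) //.
exact: sub (map_f _ _).
Qed.

Lemma fd_mult (f : word -> k) : onH q f -> f [::] = 1 ->
  (forall u v, f (u ++ v) = f u * f v) -> finite_dual q f.
Proof.
move=> hf f0 fm; split => //; exists (fun x => fext f x = 0).
split; [|split; [|split]] => //.
- split; first by rewrite /fext big_nil.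
  split.
    move=> x y Jx exy; rewrite -Jx.
    have uS := undup_uniq [seq p.2 | p <- x ++ y].
    rewrite (fext_coef f (S := undup [seq p.2 | p <- x ++ y])) //; last first.
      by move=> w; rewrite mem_undup map_cat mem_cat => ->; rewrite orbT.
    rewrite (fext_coef f (x := x) (S := undup [seq p.2 | p <- x ++ y])) //; last first.
      by move=> w; rewrite mem_undup map_cat mem_cat => ->.
    under eq_bigr do rewrite -exy; done.
  split; first by move=> x y Jx Jy; rewrite /fext big_cat /= -!/(fext f _) Jx Jy addr0.
  split.
    move=> c x Jx; have -> : fext f (lscale c x) = c * fext f x.
      by rewrite /fext /lscale big_map mulr_sumr; apply: eq_bigr => p _; rewrite mulrA.
    by rewrite Jx mulr0.
  move=> u x v Jx; have -> : fext f (lmul u (rmul x v)) = f u * fext f x * f v.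
    rewrite /fext /lmul /rmul !big_map mulr_sumr mulr_suml; apply: eq_bigr => p _.
    by rewrite /= !fm; ring.
  by rewrite Jx mulr0 mul0r.
- exists [:: [::]] => w; exists [:: (f w, [::])]; split => //=.
  by rewrite /lcsub /fext /lscale /= !big_cons big_nil f0 /=; ring.
Qed.
End FD.

Section Main.
Variables (k : fieldType) (n : nat) (q z : k) (s : bf k n.+2).
Local Notation N := n.+2.
Hypothesis Hq0 : q != 0.
Hypothesis Hq2 : q ^+ 2 != 1.
Hypothesis Hz : z ^+ N = q^-1.
Hypothesis Hskew : skew_pairing s.
Hypothesis Hgen : sigma_gen q z s.
Hypothesis Hdesc : descends q s.
Local Notation word := (word N).
Local Notation dual := (dual k N).
Local Notation lf := (lf s).
Local Notation rf := (rf s).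
Local Notation sL := (sL s).
Local Notation sR := (sR s).

Definition dK (i : 'I_N) (a : 'I_N) : k := z * q ^+ (a == i).
Definition K (i : 'I_N) : dual := chr (dK i).
Definition Ki (i : 'I_N) : dual := chr (fun a => (dK i a)^-1).

Lemma z_neq0 : z != 0.
Proof.
apply/eqP => z0; move: Hz; rewrite z0 expr0n /= => /esym /eqP.
by rewrite invr_eq0 (negbTE Hq0).
Qed.

Lemma dK_neq0 i a : dK i a != 0.
Proof. by rewrite /dK mulf_neq0 ?z_neq0 // expf_neq0. Qed.

Lemma KKi i : K i * Ki i = 1.
Proof. by rewrite /K /Ki chr_mul -chr_one; apply: chr_ext => a; rewrite mulfV ?dK_neq0. Qed.
Lemma KiK i : Ki i * K i = 1.
Proof. by rewrite /K /Ki chr_mul -chr_one; apply: chr_ext => a; rewrite mulVf ?dK_neq0. Qed.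
Lemma KC i j : K i * K j = K j * K i. Proof. exact: chrC. Qed.
Lemma KKiC i j : K i * Ki j = Ki j * K i. Proof. exact: chrC. Qed.
Lemma KiC i j : Ki i * Ki j = Ki j * Ki i. Proof. exact: chrC. Qed.

Lemma lf_K i : lf i i = K i. Proof. exact: lf_diag. Qed.
Lemma rf_K i : rf i i = K i. Proof. exact: rf_diag. Qed.

Lemma prod_dK (a : 'I_N) : \prod_(j <- enum 'I_N) dK j a = 1.
Proof.
rewrite /dK big_split /=.
have -> : \prod_(j <- enum 'I_N) z = z ^+ N.
  by rewrite big_enum /= prodr_const card_ord.
rewrite (bigD1_seq a) ?enum_uniq ?mem_enum //= eqxx big1 ?mulr1 ?Hz ?mulVf //.
by move=> j ja; rewrite eq_sym (negbTE ja).
Qed.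

Definition kw (i : 'I_N) : word := [seq (j, j) | j <- enum 'I_N & j != i].

Lemma sL_diag (l : seq 'I_N) :
  sL [seq (j, j) | j <- l] = chr (fun a => \prod_(j <- l) dK j a).
Proof.
elim: l => [|j l IH] /=.
  by rewrite sL_nil // -chr_one; apply: chr_ext => a; rewrite big_nil.
rewrite -cat1s sL_cat // IH sL1 lf_K /K chr_mul; apply: chr_ext => a.
by rewrite big_cons mulrC.
Qed.

Lemma sR_diag (l : seq 'I_N) :
  sR [seq (j, j) | j <- l] = chr (fun a => \prod_(j <- l) dK j a).
Proof.
elim: l => [|j l IH] /=.
  by rewrite sR_nil // -chr_one; apply: chr_ext => a; rewrite big_nil.
rewrite -cat1s sR_cat // IH sR1 rf_K /K chr_mul; apply: chr_ext => a.
by rewrite big_cons.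
Qed.

Lemma prod_dK_but i a : \prod_(j <- [seq j <- enum 'I_N | j != i]) dK j a = (dK i a)^-1.
Proof.
apply: (mulfI (dK_neq0 i a)); rewrite mulfV ?dK_neq0 // -[RHS](prod_dK a) big_filter.
by rewrite [RHS](bigD1_seq i) ?enum_uniq ?mem_enum.
Qed.

Lemma Ki_sL i : Ki i = sL (kw i).
Proof. by rewrite /kw sL_diag /Ki; apply: chr_ext => a; rewrite prod_dK_but. Qed.
Lemma Ki_sR i : Ki i = sR (kw i).
Proof. by rewrite /kw sR_diag /Ki; apply: chr_ext => a; rewrite prod_dK_but. Qed.
Lemma K_sL i : K i = sL [:: (i, i)]. Proof. by rewrite sL1 lf_K. Qed.
Lemma K_sR i : K i = sR [:: (i, i)]. Proof. by rewrite sR1 rf_K. Qed.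

Lemma prodK : convprod [seq K i | i <- enum 'I_N] = (1 : dual).
Proof.
have -> : forall l, convprod [seq K i | i <- l] = (chr (fun a => \prod_(j <- l) dK j a) : dual).
  elim=> [|j l IH] /=; first by rewrite -dual_oneE -chr_one; apply: chr_ext => a; rewrite big_nil.
  rewrite IH -dual_mulE /K chr_mul; apply: chr_ext => a; by rewrite big_cons.
by rewrite -chr_one; apply: chr_ext => a; rewrite prod_dK.
Qed.
End Main.

Section Alg.
Variables (k : fieldType) (R : algType k).

Lemma inv_comm (u v A : R) (c : k) : u * v = 1 -> v * u = 1 -> c != 0 ->
  u * A = c *: (A * u) -> v * A = c^-1 *: (A * v).
Proof.
move=> uv vu c0 H.
have : A * v = c *: (v * A).
  by rewrite -[A * v]mul1r -vu -mulrA (mulrA u) H -scalerAl -scalerAr -!mulrA uv mulr1.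
by move=> ->; rewrite scalerA mulVf // scale1r.
Qed.

Lemma push_l (u A X : R) (c : k) : u * A = c *: (A * u) -> u * (A * X) = c *: (A * (u * X)).
Proof. by move=> H; rewrite mulrA H -scalerAl -mulrA. Qed.
End Alg.

Section Comm.
Variables (k : fieldType) (n : nat) (q z : k) (s : bf k n.+2).
Local Notation N := n.+2.
Hypothesis Hq0 : q != 0.
Hypothesis Hq2 : q ^+ 2 != 1.
Hypothesis Hz : z ^+ N = q^-1.
Hypothesis Hskew : skew_pairing s.
Hypothesis Hgen : sigma_gen q z s.
Hypothesis Hdesc : descends q s.
Local Notation word := (word N).
Local Notation dual := (dual k N).
Local Notation lf := (lf s).
Local Notation rf := (rf s).
Local Notation K := (K q z).
Local Notation Ki := (Ki q z).

Lemma lfU (i j : 'I_N) : (i < j)%N -> lf i j = 0.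
Proof. by move=> ij; apply: funext => w; rewrite (lf_upper Hskew Hgen _ ij). Qed.
Lemma rfL (i j : 'I_N) : (j < i)%N -> rf i j = 0.
Proof. by move=> ji; apply: funext => w; rewrite (rf_lower Hskew Hgen _ ji). Qed.

Definition eL (i a b : 'I_N) : k := if i == b then q else if i == a then q^-1 else 1.
Definition eR (i a b : 'I_N) : k := if i == a then q else if i == b then q^-1 else 1.

Lemma eL_neq0 i a b : eL i a b != 0.
Proof. by rewrite /eL; case: ifP => _; rewrite ?invr_eq0 ?oner_neq0 //; case: ifP => _; rewrite ?invr_eq0 ?oner_neq0. Qed.
Lemma eR_neq0 i a b : eR i a b != 0.
Proof. by rewrite /eR; case: ifP => _; rewrite ?invr_eq0 ?oner_neq0 //; case: ifP => _; rewrite ?invr_eq0 ?oner_neq0. Qed.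

Lemma swap_q (X Y : dual) : X = q *: Y -> Y = q^-1 *: X.
Proof. by move=> ->; rewrite scalerA mulVf // scale1r. Qed.

Lemma KA (i a b : 'I_N) : (a : nat) = b.+1 -> K i * lf a b = eL i a b *: (lf a b * K i).
Proof.
move=> ab; have ba : (b < a)%N by rewrite ab.
rewrite /eL; case: (eqVneq i b) => [->|ib].
  by rewrite -!(lf_K Hskew Hgen) (relL2 Hskew Hdesc).
case: (eqVneq i a) => [->|ia].
  by rewrite -!(lf_K Hskew Hgen) (swap_q (relL1 Hskew Hdesc _ ba)).
rewrite scale1r -!(lf_K Hskew Hgen); apply/eqP; rewrite -subr_eq0.
case: (ltngtP i b) => [lib|lbi|eib]; last by move: ib; rewrite (ord_inj eib) eqxx.
  have lia : (i < a)%N by rewrite ab ltnS ltnW.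
  by rewrite (relL4 Hskew Hdesc lia lib) (lfU lib) mulr0 scaler0.
have lai : (a < i)%N.
  rewrite ltn_neqAle {2}ab lbi andbT; apply/eqP => /ord_inj ai.
  by move: ia; rewrite ai eqxx.
have lbi' : (b < i)%N by exact: ltn_trans ba lai.
rewrite -opprB oppr_eq0 (relL4 Hskew Hdesc lai lbi') (lfU lai).
by rewrite mulr0 scaler0.
Qed.

Lemma KP (i a b : 'I_N) : (a : nat) = b.+1 -> K i * rf b a = eR i a b *: (rf b a * K i).
Proof.
move=> ab; have ba : (b < a)%N by rewrite ab.
rewrite /eR; case: (eqVneq i a) => [->|ia].
  by rewrite -!(rf_K Hskew Hgen) (relR2 Hskew Hdesc).
case: (eqVneq i b) => [->|ib].
  by rewrite -!(rf_K Hskew Hgen) (swap_q (relR1 Hskew Hdesc _ ba)).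
rewrite scale1r -!(rf_K Hskew Hgen); apply/eqP; rewrite -subr_eq0.
case: (ltngtP i b) => [lib|lbi|eib]; last by move: ib; rewrite (ord_inj eib) eqxx.
  have lia : (i < a)%N by rewrite ab ltnS ltnW.
  rewrite -opprB oppr_eq0.
  by rewrite (relR4 Hskew Hdesc lib lia) (rfL lib) mulr0 scaler0.
have lai : (a < i)%N.
  rewrite ltn_neqAle {2}ab lbi andbT; apply/eqP => /ord_inj ai.
  by move: ia; rewrite ai eqxx.
have lbi' : (b < i)%N by exact: ltn_trans ba lai.
by rewrite (relR4 Hskew Hdesc lbi' lai) (rfL lai) mulr0 scaler0.
Qed.

Lemma KiA (i a b : 'I_N) : (a : nat) = b.+1 -> Ki i * lf a b = (eL i a b)^-1 *: (lf a b * Ki i).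
Proof.
move=> ab; apply: inv_comm (KA i ab); rewrite ?eL_neq0 //.
- exact: KKi. - exact: KiK.
Qed.

Lemma KiP (i a b : 'I_N) : (a : nat) = b.+1 -> Ki i * rf b a = (eR i a b)^-1 *: (rf b a * Ki i).
Proof.
move=> ab; apply: inv_comm (KP i ab); rewrite ?eR_neq0 //.
- exact: KKi. - exact: KiK.
Qed.
End Comm.

Section NC.
Variables (k : fieldType) (R : algType k).

Lemma push_l' (u A X : R) (c : k) : u * A = c *: (A * u) -> u * (A * X) = c *: (A * (u * X)).
Proof. by move=> H; rewrite mulrA H -scalerAl -mulrA. Qed.

Lemma lin3 (X Y Z : R) (c : k) : X - (1 + c) *: Y + c *: Z = (X - Y) - (c *: Y - c *: Z).
Proof. by rewrite scalerDl scale1r !opprD !opprK !addrA. Qed.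

Lemma sc0 (a b : k) (M : R) : a = b -> a *: M - b *: M = 0.
Proof. by move=> ->; rewrite subrr. Qed.

Lemma lcore (A B C K : R) (q l : k) : q != 0 ->
  A * B - B * A = l *: (C * K) -> A * C = q *: (C * A) -> C * B = q *: (B * C) ->
  K * A = q^-1 *: (A * K) -> K * C = C * K -> K * B = q *: (B * K) ->
  A * (A * B) - (1 + q ^+ 2) *: (A * (B * A)) + q ^+ 2 *: (B * (A * A)) = 0 /\
  A * (B * B) - (1 + q ^+ 2) *: (B * (A * B)) + q ^+ 2 *: (B * (B * A)) = 0.
Proof.
move=> q0 HX HAC HCB HKA HKC HKB; split.
- have e : A * (A * B - B * A) - q ^+ 2 *: ((A * B - B * A) * A) = 0.
    rewrite HX -scalerAl -scalerAr mulrA HAC -scalerAl -mulrA -[C * K * A]mulrA HKA.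
    by rewrite -scalerAr !scalerA; apply: sc0; field.
  rewrite lin3 -e mulrBr mulrBl scalerBr !mulrA.
  by [].
- have e : (A * B - B * A) * B - q ^+ 2 *: (B * (A * B - B * A)) = 0.
    rewrite HX -scalerAl -scalerAr -mulrA HKB -scalerAr mulrA HCB -scalerAl !mulrA.
    by rewrite !scalerA; apply: sc0; ring.
  rewrite lin3 -e mulrBr mulrBl scalerBr !mulrA.
  by [].
Qed.

Lemma rcore (A B C K : R) (q l : k) : q != 0 ->
  B * A - A * B = l *: (C * K) -> C * A = q *: (A * C) -> B * C = q *: (C * B) ->
  K * A = q *: (A * K) -> K * B = q^-1 *: (B * K) -> K * C = C * K ->
  q ^+ 2 *: (A * (A * B)) - (1 + q ^+ 2) *: (A * (B * A)) + B * (A * A) = 0 /\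
  B * (B * A) - (1 + q ^+ 2) *: (B * (A * B)) + q ^+ 2 *: (A * (B * B)) = 0.
Proof.
move=> q0 HY HCA HBC HKA HKB HKC; split.
- have e : (B * A - A * B) * A - q ^+ 2 *: (A * (B * A - A * B)) = 0.
    rewrite HY -scalerAl -scalerAr -mulrA HKA -scalerAr mulrA HCA -scalerAl !mulrA.
    by rewrite !scalerA; apply: sc0; ring.
  have -> : q ^+ 2 *: (A * (A * B)) - (1 + q ^+ 2) *: (A * (B * A)) + B * (A * A)
     = B * (A * A) - (1 + q ^+ 2) *: (A * (B * A)) + q ^+ 2 *: (A * (A * B)).
    by rewrite addrC addrA addrAC.
  rewrite lin3 -e mulrBr mulrBl scalerBr !mulrA.
  by [].
- have e : B * (B * A - A * B) - q ^+ 2 *: ((B * A - A * B) * B) = 0.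
    rewrite HY -scalerAl -scalerAr mulrA HBC -scalerAl -mulrA -[C * K * B]mulrA HKB.
    by rewrite -scalerAr !scalerA !mulrA; apply: sc0; field.
  rewrite lin3 -e mulrBr mulrBl scalerBr !mulrA.
  by [].
Qed.

Ltac pushtac h11 h12 h21 h22 hu :=
  let pu := fresh "pu" in
  have pu : forall X, _ * (_ * X) = _ * (_ * X) := (fun X => etrans (mulrA _ _ X)
      (etrans (congr1 (fun y => y * X) (esym hu)) (esym (mulrA _ _ X))));
  rewrite -!mulrA;
  repeat first [rewrite (push_l' _ h11) | rewrite (push_l' _ h12) | rewrite (push_l' _ h21)
  | rewrite (push_l' _ h22) | rewrite pu | rewrite -scalerAr | rewrite scalerA];
  congr (_ *: _); ring.

Section Push.
Variables (A B u1 u2 : R) (a11 a12 a21 a22 : k).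
Definition PH := [/\ u1 * A = a11 *: (A * u1), u1 * B = a12 *: (B * u1),
  u2 * A = a21 *: (A * u2), u2 * B = a22 *: (B * u2) & u1 * u2 = u2 * u1].

Lemma pushE1 : PH -> (u1 * A) * ((u1 * A) * ((u2 * B) * 1)) =
  (a11 ^+ 3 * a12 ^+ 2 * a22) *: (A * (A * (B * (u1 * (u1 * (u2 * 1)))))).
Proof. by case=> h11 h12 h21 h22 hu; pushtac h11 h12 h21 h22 hu. Qed.
Lemma pushE2 : PH -> (u1 * A) * ((u2 * B) * ((u1 * A) * 1)) =
  (a11 ^+ 3 * a12 * a21 * a22) *: (A * (B * (A * (u1 * (u1 * (u2 * 1)))))).
Proof. by case=> h11 h12 h21 h22 hu; pushtac h11 h12 h21 h22 hu. Qed.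
Lemma pushE3 : PH -> (u2 * B) * ((u1 * A) * ((u1 * A) * 1)) =
  (a22 * a21 ^+ 2 * a11 ^+ 3) *: (B * (A * (A * (u1 * (u1 * (u2 * 1)))))).
Proof. by case=> h11 h12 h21 h22 hu; pushtac h11 h12 h21 h22 hu. Qed.
Lemma pushE4 : PH -> (u2 * B) * ((u2 * B) * ((u1 * A) * 1)) =
  (a22 ^+ 3 * a21 ^+ 2 * a11) *: (B * (B * (A * (u1 * (u2 * (u2 * 1)))))).
Proof. by case=> h11 h12 h21 h22 hu; pushtac h11 h12 h21 h22 hu. Qed.
Lemma pushE5 : PH -> (u2 * B) * ((u1 * A) * ((u2 * B) * 1)) =
  (a22 ^+ 3 * a21 * a11 * a12) *: (B * (A * (B * (u1 * (u2 * (u2 * 1)))))).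
Proof. by case=> h11 h12 h21 h22 hu; pushtac h11 h12 h21 h22 hu. Qed.
Lemma pushE6 : PH -> (u1 * A) * ((u2 * B) * ((u2 * B) * 1)) =
  (a11 * a12 ^+ 2 * a22 ^+ 3) *: (A * (B * (B * (u1 * (u2 * (u2 * 1)))))).
Proof. by case=> h11 h12 h21 h22 hu; pushtac h11 h12 h21 h22 hu. Qed.
End Push.
End NC.

Section Comb.
Variables (k : fieldType) (R : algType k).
Lemma comb (X Y Z : R) (d0 d e kap : k) :
  d0 *: X - d *: Y + e *: Z = 0 ->
  (kap * d0) *: X - (kap * d) *: Y + (kap * e) *: Z = 0.
Proof. by move=> H; rewrite -!scalerA -scalerBr -scalerDr H scaler0. Qed.
End Comb.

Section Comb2.
Variables (k : fieldType) (R : algType k).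
Lemma comb' (X Y Z : R) (d0 d e kap a b c : k) :
  a = kap * d0 -> b = kap * d -> c = kap * e ->
  d0 *: X - d *: Y + e *: Z = 0 -> a *: X - b *: Y + c *: Z = 0.
Proof. by move=> -> -> ->; apply: comb. Qed.
End Comb2.

Section Rev3.
Variables (k : fieldType) (R : algType k).
Lemma rev3 (X Y Z : R) (a b c : k) :
  a *: X - b *: Y + c *: Z = 0 -> c *: Z - b *: Y + a *: X = 0.
Proof. by move=> <-; rewrite addrC addrA addrAC. Qed.
Lemma rev3' (X Y Z : R) (b c : k) :
  X - b *: Y + c *: Z = 0 -> c *: Z - b *: Y + 1 *: X = 0.
Proof. by move=> H; apply: rev3; rewrite scale1r. Qed.
End Rev3.

Section Sc3.
Variables (k : fieldType) (R : algType k).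
Lemma sc3 (a : k) (X Y Z : R) :
  (a *: X) * ((a *: Y) * ((a *: Z) * 1)) = (a * (a * a)) *: (X * (Y * (Z * 1))).
Proof. by rewrite -!scalerAl -!scalerAr !scalerA. Qed.
Lemma sc3comb (a c : k) (T1 T2 T3 : R) :
  T1 - c *: T2 + T3 = 0 -> a *: T1 - c *: (a *: T2) + a *: T3 = 0.
Proof. by move=> H; rewrite scalerA mulrC -scalerA -scalerBr -scalerDr H scaler0. Qed.
End Sc3.

Section EF.
Variables (k : fieldType) (n : nat) (q z : k) (s : bf k n.+2).
Local Notation N := n.+2.
Hypothesis Hq0 : q != 0.
Hypothesis Hq2 : q ^+ 2 != 1.
Hypothesis Hz : z ^+ N = q^-1.
Hypothesis Hskew : skew_pairing s.
Hypothesis Hgen : sigma_gen q z s.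
Hypothesis Hdesc : descends q s.
Local Notation word := (word N).
Local Notation dual := (dual k N).
Local Notation lf := (lf s).
Local Notation rf := (rf s).
Local Notation K := (K q z).
Local Notation Ki := (Ki q z).
Local Notation eL := (eL q).
Local Notation eR := (eR q).

Definition lo (t : 'I_n.+1) : 'I_N := inord t.
Definition hi (t : 'I_n.+1) : 'I_N := inord t.+1.
Lemma lo_val t : (lo t : nat) = t.
Proof. by rewrite /lo inordK // (leq_trans (ltn_ord t)). Qed.
Lemma hi_val t : (hi t : nat) = t.+1.
Proof. by rewrite /hi inordK // ltnS (ltn_ord t). Qed.
Lemma hilo t : (hi t : nat) = (lo t).+1.
Proof. by rewrite hi_val lo_val. Qed.

Definition E (t : 'I_n.+1) : dual := Ki (hi t) * lf (hi t) (lo t).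
Definition mu : k := (q - q^-1) ^- 2.
Definition F (t : 'I_n.+1) : dual := mu *: (Ki (lo t) * rf (lo t) (hi t)).

Lemma lam_neq0 : q - q^-1 != 0.
Proof.
apply: contra Hq2 => /eqP h; apply/eqP.
have : q * (q - q^-1) = 0 by rewrite h mulr0.
by rewrite mulrBr mulfV // => /eqP; rewrite subr_eq0 => /eqP <-; rewrite expr2.
Qed.

Lemma KE i t : K i * (E t * (Ki i * 1)) = eL i (hi t) (lo t) *: E t.
Proof.
rewrite mulr1 /E -mulrA mulrA (KKiC q z) -mulrA.
rewrite (push_l' _ (KA Hq0 Hskew Hgen Hdesc i (hilo t))) (KKi Hq0 Hz) mulr1.
by rewrite -scalerAr.
Qed.

Lemma KF i t : K i * (F t * (Ki i * 1)) = eR i (hi t) (lo t) *: F t.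
Proof.
rewrite mulr1 /F -scalerAl -scalerAr [RHS]scalerA [_ * mu]mulrC -scalerA; congr (_ *: _).
rewrite -mulrA [K i * _]mulrA (KKiC q z) -mulrA.
rewrite (push_l' _ (KP Hq0 Hskew Hgen Hdesc i (hilo t))) (KKi Hq0 Hz) mulr1.
by rewrite -scalerAr.
Qed.

Lemma qpow (x y : bool) : ~~ (x && y) ->
  q ^ (x%:Z - y%:Z) = if x then q else if y then q^-1 else 1.
Proof. by case: x; case: y => //= _; rewrite ?expr1z ?exprN1 ?expr0z. Qed.

Lemma lohi_neq t : (lo t == hi t) = false.
Proof. by apply/negbTE; rewrite -(inj_eq val_inj) /= hilo neq_ltn ltnSn. Qed.

Lemma ordE (a b : 'I_N) : (a == b) = ((a : nat) == b).
Proof. by []. Qed.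

Lemma lo_succ (x y : 'I_n.+1) : (y : nat) = x.+1 -> lo y = hi x.
Proof. by move=> yx; apply: val_inj; rewrite /= lo_val hi_val. Qed.

Lemma serreE (x y : 'I_n.+1) : (y : nat) = x.+1 ->
  (E x * (E x * (E y * 1)) - (q + q^-1) *: (E x * (E y * (E x * 1)))
     + E y * (E x * (E x * 1)) = 0) /\
  (E y * (E y * (E x * 1)) - (q + q^-1) *: (E y * (E x * (E y * 1)))
     + E x * (E y * (E y * 1)) = 0).
Proof.
move=> yx; have ly := lo_succ yx.
rewrite /E ly.
set o0 := lo x; set o1 := hi x; set o2 := hi y.
have v0 : (o0 : nat) = x by rewrite lo_val.
have v1 : (o1 : nat) = x.+1 by rewrite hi_val.
have v2 : (o2 : nat) = x.+2 by rewrite hi_val yx.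
have l01 : (o0 < o1)%N by rewrite v0 v1.
have l12 : (o1 < o2)%N by rewrite v1 v2.
have l02 : (o0 < o2)%N by rewrite v0 v2 ltnW.
have n10 : (o1 == o0) = false by rewrite ordE v0 v1 gtn_eqF.
have n21 : (o2 == o1) = false by rewrite ordE v1 v2 gtn_eqF.
have n20 : (o2 == o0) = false by rewrite ordE v0 v2 gtn_eqF // ltnW.
have s10 : (o1 : nat) = o0.+1 by rewrite v0 v1.
have s21 : (o2 : nat) = o1.+1 by rewrite v1 v2.
have LK := lf_K Hskew Hgen.
have HX : lf o1 o0 * lf o2 o1 - lf o2 o1 * lf o1 o0 = (q - q^-1) *: (lf o2 o0 * K o1).
  by rewrite (relL4 Hskew Hdesc l12 l01) LK.
have HAC := relL2 Hskew Hdesc o0 l12.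
have HCB := relL1 Hskew Hdesc o2 l01.
have HKA : K o1 * lf o1 o0 = q^-1 *: (lf o1 o0 * K o1).
  by rewrite (KA Hq0 Hskew Hgen Hdesc o1 s10) /eL n10 eqxx.
have HKC : K o1 * lf o2 o0 = lf o2 o0 * K o1.
  by rewrite -LK (relL3 Hskew Hdesc l12 l01).
have HKB : K o1 * lf o2 o1 = q *: (lf o2 o1 * K o1).
  by rewrite (KA Hq0 Hskew Hgen Hdesc o1 s21) /eL eqxx.
have [c1 c2] := lcore Hq0 HX HAC HCB HKA HKC HKB.
have ph : PH (lf o1 o0) (lf o2 o1) (Ki o1) (Ki o2) q q^-1 1 q.
  split.
  - by rewrite (KiA Hq0 Hz Hskew Hgen Hdesc o1 s10) /eL n10 eqxx invrK.
  - by rewrite (KiA Hq0 Hz Hskew Hgen Hdesc o1 s21) /eL eqxx.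
  - by rewrite (KiA Hq0 Hz Hskew Hgen Hdesc o2 s10) /eL n20 n21 invr1.
  - by rewrite (KiA Hq0 Hz Hskew Hgen Hdesc o2 s21) /eL n21 eqxx invrK.
  - exact: KiC.
rewrite (pushE1 ph) (pushE2 ph) (pushE3 ph) (pushE4 ph) (pushE5 ph) (pushE6 ph) !scalerA.
split.
- have := congr1 (fun M => M * (Ki o1 * (Ki o1 * (Ki o2 * 1)))) c1.
  rewrite /= mul0r !mulrDl !mulNr -!scalerAl -!mulrA => c1'.
  apply: (comb' (d0 := 1) (d := 1 + q ^+ 2) (e := q ^+ 2) (kap := q ^+ 2)).
  - by field.
  - by field.
  - by field.
  - by rewrite scale1r.
- have := congr1 (fun M => M * (Ki o1 * (Ki o2 * (Ki o2 * 1)))) c2.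
  rewrite /= mul0r !mulrDl !mulNr -!scalerAl -!mulrA => /rev3' c2'.
  apply: (comb' (d0 := q ^+ 2) (d := 1 + q ^+ 2) (e := 1) (kap := q ^+ 2)) c2'.
  - by field.
  - by field.
  - by field.
Qed.

Lemma serreF (x y : 'I_n.+1) : (y : nat) = x.+1 ->
  (F x * (F x * (F y * 1)) - (q + q^-1) *: (F x * (F y * (F x * 1)))
     + F y * (F x * (F x * 1)) = 0) /\
  (F y * (F y * (F x * 1)) - (q + q^-1) *: (F y * (F x * (F y * 1)))
     + F x * (F y * (F y * 1)) = 0).
Proof.
move=> yx; have ly := lo_succ yx.
rewrite /F ly !sc3.
set o0 := lo x; set o1 := hi x; set o2 := hi y.
have v0 : (o0 : nat) = x by rewrite lo_val.
have v1 : (o1 : nat) = x.+1 by rewrite hi_val.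
have v2 : (o2 : nat) = x.+2 by rewrite hi_val yx.
have l01 : (o0 < o1)%N by rewrite v0 v1.
have l12 : (o1 < o2)%N by rewrite v1 v2.
have n01 : (o0 == o1) = false by rewrite ordE v0 v1 ltn_eqF.
have n12 : (o1 == o2) = false by rewrite ordE v1 v2 ltn_eqF.
have n02 : (o0 == o2) = false by rewrite ordE v0 v2 ltn_eqF // ltnW.
have s10 : (o1 : nat) = o0.+1 by rewrite v0 v1.
have s21 : (o2 : nat) = o1.+1 by rewrite v1 v2.
have RK := rf_K Hskew Hgen.
have HY : rf o1 o2 * rf o0 o1 - rf o0 o1 * rf o1 o2 = (q - q^-1) *: (rf o0 o2 * K o1).
  by rewrite (relR4 Hskew Hdesc l01 l12) RK.
have HCA := relR1 Hskew Hdesc o0 l12.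
have HBC := relR2 Hskew Hdesc o2 l01.
have HKA : K o1 * rf o0 o1 = q *: (rf o0 o1 * K o1).
  by rewrite (KP Hq0 Hskew Hgen Hdesc o1 s10) /eR eqxx.
have HKB : K o1 * rf o1 o2 = q^-1 *: (rf o1 o2 * K o1).
  by rewrite (KP Hq0 Hskew Hgen Hdesc o1 s21) /eR n12 eqxx.
have HKC : K o1 * rf o0 o2 = rf o0 o2 * K o1.
  by rewrite -RK (relR3 Hskew Hdesc l01 l12).
have [c1 c2] := rcore Hq0 HY HCA HBC HKA HKB HKC.
have ph : PH (rf o0 o1) (rf o1 o2) (Ki o0) (Ki o1) q 1 q^-1 q.
  split.
  - by rewrite (KiP Hq0 Hz Hskew Hgen Hdesc o0 s10) /eR n01 eqxx invrK.
  - by rewrite (KiP Hq0 Hz Hskew Hgen Hdesc o0 s21) /eR n02 n01 invr1.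
  - by rewrite (KiP Hq0 Hz Hskew Hgen Hdesc o1 s10) /eR eqxx.
  - by rewrite (KiP Hq0 Hz Hskew Hgen Hdesc o1 s21) /eR n12 eqxx invrK.
  - exact: KiC.
split; apply: sc3comb;
  rewrite ?(pushE1 ph) ?(pushE2 ph) ?(pushE3 ph) ?(pushE4 ph) ?(pushE5 ph) ?(pushE6 ph) !scalerA.
- have := congr1 (fun M => M * (Ki o0 * (Ki o0 * (Ki o1 * 1)))) c1.
  move=> c1'; rewrite /= mul0r !mulrDl !mulNr -!scalerAl -!mulrA in c1'.
  apply: (comb' (d0 := q ^+ 2) (d := 1 + q ^+ 2) (e := 1) (kap := q ^+ 2)).
  - by field.
  - by field.
  - by field.
  - by rewrite scale1r.
- have := congr1 (fun M => M * (Ki o0 * (Ki o1 * (Ki o1 * 1)))) c2.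
  move=> c2'; rewrite /= mul0r !mulrDl !mulNr -!scalerAl -!mulrA in c2'.
  apply: (comb' (d0 := 1) (d := 1 + q ^+ 2) (e := q ^+ 2) (kap := q ^+ 2)).
  - by field.
  - by field.
  - by field.
  - by rewrite scale1r.
Qed.

Lemma EEc (x y : 'I_n.+1) : (x.+1 < y)%N -> E y * E x = E x * E y.
Proof.
move=> xy; rewrite /E.
set lx := lo x; set hx := hi x; set ly := lo y; set hy := hi y.
have vlx : (lx : nat) = x by rewrite lo_val.
have vhx : (hx : nat) = x.+1 by rewrite hi_val.
have vly : (ly : nat) = y by rewrite lo_val.
have vhy : (hy : nat) = y.+1 by rewrite hi_val.
have e1 : Ki hx * lf hy ly = lf hy ly * Ki hx.
  have f1 : (hx == ly) = false by rewrite ordE vhx vly ltn_eqF.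
  have f2 : (hx == hy) = false by rewrite ordE vhx vhy ltn_eqF // ltnS ltnW.
  by rewrite (KiA Hq0 Hz Hskew Hgen Hdesc hx (hilo y)) /eL f1 f2 invr1 scale1r.
have e2 : Ki hy * lf hx lx = lf hx lx * Ki hy.
  have f1 : (hy == lx) = false by rewrite ordE vhy vlx gtn_eqF // ltnW // ltnW.
  have f2 : (hy == hx) = false by rewrite ordE vhx vhy gtn_eqF // ltnS ltnW.
  by rewrite (KiA Hq0 Hz Hskew Hgen Hdesc hy (hilo x)) /eL f1 f2 invr1 scale1r.
have e3 : lf hx lx * lf hy ly = lf hy ly * lf hx lx.
  apply/eqP; rewrite -subr_eq0.
  have h1 : (hx < hy)%N by rewrite vhx vhy ltnS ltnW.
  have h2 : (lx < ly)%N by rewrite vlx vly ltnW.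
  have h3 : (hx < ly)%N by rewrite vhx vly.
  by rewrite (relL4 Hskew Hdesc h1 h2) (lfU Hskew Hgen h3) mulr0 scaler0.
rewrite -!mulrA [lf hy ly * _]mulrA -e1 -mulrA [lf hx lx * _]mulrA -e2 -mulrA.
by rewrite !mulrA (KiC q z hy hx) -!mulrA e3.
Qed.

Lemma FFc (x y : 'I_n.+1) : (x.+1 < y)%N -> F y * F x = F x * F y.
Proof.
move=> xy; rewrite /F -!scalerAl -!scalerAr !scalerA; congr (_ *: _).
set lx := lo x; set hx := hi x; set ly := lo y; set hy := hi y.
have vlx : (lx : nat) = x by rewrite lo_val.
have vhx : (hx : nat) = x.+1 by rewrite hi_val.
have vly : (ly : nat) = y by rewrite lo_val.
have vhy : (hy : nat) = y.+1 by rewrite hi_val.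
have e1 : Ki lx * rf ly hy = rf ly hy * Ki lx.
  have f1 : (lx == hy) = false by rewrite ordE vlx vhy ltn_eqF // ltnW // ltnW.
  have f2 : (lx == ly) = false by rewrite ordE vlx vly ltn_eqF // ltnW.
  by rewrite (KiP Hq0 Hz Hskew Hgen Hdesc lx (hilo y)) /eR f1 f2 invr1 scale1r.
have e2 : Ki ly * rf lx hx = rf lx hx * Ki ly.
  have f1 : (ly == hx) = false by rewrite ordE vly vhx gtn_eqF.
  have f2 : (ly == lx) = false by rewrite ordE vly vlx gtn_eqF // ltnW.
  by rewrite (KiP Hq0 Hz Hskew Hgen Hdesc ly (hilo x)) /eR f1 f2 invr1 scale1r.
have e3 : rf ly hy * rf lx hx = rf lx hx * rf ly hy.
  apply/eqP; rewrite -subr_eq0.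
  have h1 : (lx < ly)%N by rewrite vlx vly ltnW.
  have h2 : (hx < hy)%N by rewrite vhx vhy ltnS ltnW.
  have h3 : (hx < ly)%N by rewrite vhx vly.
  by rewrite (relR4 Hskew Hdesc h1 h2) (rfL Hskew Hgen h3) mulr0 scaler0.
rewrite -!mulrA [rf ly hy * _]mulrA -e1 -mulrA [rf lx hx * _]mulrA -e2 -mulrA.
by rewrite !mulrA (KiC q z ly lx) -!mulrA e3.
Qed.
End EF.

Section GB.
Variables (k : fieldType) (N : nat).
Local Notation dual := (dual k N).

Lemma allP_cat (T : Type) (P : T -> Prop) s1 s2 :
  Defs.allP P s1 -> Defs.allP P s2 -> Defs.allP P (s1 ++ s2).
Proof. by elim: s1 => //= x s IH [px ps] h2; split => //; apply: IH. Qed.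

Lemma allP_map (T U : Type) (P : U -> Prop) (f : T -> U) (s : seq T) :
  Defs.allP (fun x => P (f x)) s -> Defs.allP P (map f s).
Proof. by elim: s => //= x s IH [px ps]; split => //; apply: IH. Qed.

Lemma allP_impl (T : Type) (P Q : T -> Prop) (s : seq T) :
  (forall x, P x -> Q x) -> Defs.allP P s -> Defs.allP Q s.
Proof. by move=> H; elim: s => //= x s IH [px ps]; split; [apply: H | apply: IH]. Qed.

Lemma allP_allpairs (T U V : Type) (P : V -> Prop) (f : T -> U -> V) s t :
  (forall x y, P (f x y)) -> Defs.allP P [seq f x y | x <- s, y <- t].
Proof.
move=> H; elim: s => //= x s IH; apply: allP_cat => //.
by elim: t {IH} => //= y t IH; split.
Qed.

Lemma convprod_cat (l1 l2 : seq (fn k N)) :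
  convprod (l1 ++ l2) = (convprod l1 : dual) * convprod l2.
Proof.
elim: l1 => [|f l IH] /=; first by rewrite -dual_oneE mul1r.
by rewrite IH -!dual_mulE mulrA.
Qed.

Definition gsum (t : seq (k * seq (fn k N))) : dual :=
  \sum_(p <- t) p.1 *: (convprod p.2 : dual).

Lemma gsumE t w : gsum t w = \sum_(p <- t) p.1 * convprod p.2 w.
Proof.
rewrite /gsum; elim: t => [|p t IH]; first by rewrite !big_nil.
by rewrite !big_cons dual_addE IH dual_scaleE.
Qed.

Variable G : fn k N -> Prop.
Definition GBp (f : dual) := gen_by G f.

Lemma GB_sum f : GBp f <-> exists t, Defs.allP (fun p => Defs.allP G p.2) t /\ f = gsum t.
Proof.
split=> -[t [ht hf]]; exists t; split => //.
  by apply: funext => w; rewrite gsumE hf.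
by move=> w; rewrite hf gsumE.
Qed.

Lemma GB0 : GBp 0.
Proof. by apply/GB_sum; exists [::]; split => //; rewrite /gsum big_nil. Qed.

Lemma GB1 : GBp 1.
Proof.
apply/GB_sum; exists [:: (1, [::])]; split => //.
by rewrite /gsum big_cons big_nil addr0 scale1r /= -dual_oneE.
Qed.

Lemma GBG g : G g -> GBp g.
Proof.
move=> Gg; apply/GB_sum; exists [:: (1, [:: g])]; split => //.
by rewrite /gsum big_cons big_nil addr0 scale1r /= -dual_mulE -dual_oneE mulr1.
Qed.

Lemma GBD f g : GBp f -> GBp g -> GBp (f + g).
Proof.
move=> /GB_sum[t1 [h1 ->]] /GB_sum[t2 [h2 ->]]; apply/GB_sum.
by exists (t1 ++ t2); split; [apply: allP_cat | rewrite /gsum big_cat].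
Qed.

Lemma GBZ c f : GBp f -> GBp (c *: f).
Proof.
move=> /GB_sum[t [h ->]]; apply/GB_sum.
exists [seq (c * p.1, p.2) | p <- t]; split.
  by apply: allP_map; apply: allP_impl h.
rewrite /gsum big_map scaler_sumr; apply: eq_bigr => p _; by rewrite scalerA.
Qed.

Lemma GBN f : GBp f -> GBp (- f).
Proof. by move=> h; rewrite -scaleN1r; apply: GBZ. Qed.

Lemma GBB f g : GBp f -> GBp g -> GBp (f - g).
Proof. by move=> hf hg; apply: GBD => //; apply: GBN. Qed.

Lemma GBM f g : GBp f -> GBp g -> GBp (f * g).
Proof.
move=> /GB_sum[t1 [h1 ->]] /GB_sum[t2 [h2 ->]]; apply/GB_sum.
exists [seq (p.1 * p'.1, p.2 ++ p'.2) | p <- t1, p' <- t2]; split.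
  elim: t1 h1 => //= p t1 IH [hp ht1]; apply: allP_cat; last exact: IH.
  apply: allP_map; elim: t2 h2 {IH} => //= p' t2 IH [hp' ht2]; split; last exact: IH.
  exact: allP_cat.
rewrite /gsum big_allpairs_dep mulr_suml; apply: eq_bigr => p _.
rewrite mulr_sumr; apply: eq_bigr => p' _.
by rewrite convprod_cat -scalerAl -scalerAr scalerA.
Qed.
End GB.

Section Gen.
Variables (k : fieldType) (n : nat) (q z : k) (s : bf k n.+2).
Local Notation N := n.+2.
Hypothesis Hq0 : q != 0.
Hypothesis Hq2 : q ^+ 2 != 1.
Hypothesis Hz : z ^+ N = q^-1.
Hypothesis Hskew : skew_pairing s.
Hypothesis Hgen : sigma_gen q z s.
Hypothesis Hdesc : descends q s.
Local Notation word := (word N).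
Local Notation dual := (dual k N).
Local Notation lf := (lf s).
Local Notation rf := (rf s).
Local Notation K := (K q z).
Local Notation Ki := (Ki q z).
Local Notation E := (E q z s).
Local Notation F := (F q z s).
Local Notation sL := (sL s).
Local Notation sR := (sR s).

Definition GL (g : fn k N) : Prop :=
  (exists i, g =1 lfun s i i \/ g =1 Ki i) \/ exists t, g =1 E t.
Definition GR (g : fn k N) : Prop :=
  (exists i, g =1 lfun s i i \/ g =1 Ki i) \/ exists t, g =1 F t.

Lemma GL_K i : GBp GL (K i).
Proof. by rewrite -(lf_K Hskew Hgen); apply: GBG; left; exists i; left. Qed.
Lemma GL_Ki i : GBp GL (Ki i).
Proof. by apply: GBG; left; exists i; right. Qed.
Lemma GL_E t : GBp GL (E t).
Proof. by apply: GBG; right; exists t. Qed.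
Lemma GR_K i : GBp GR (K i).
Proof. by rewrite -(lf_K Hskew Hgen); apply: GBG; left; exists i; left. Qed.
Lemma GR_Ki i : GBp GR (Ki i).
Proof. by apply: GBG; left; exists i; right. Qed.
Lemma GR_F t : GBp GR (F t).
Proof. by apply: GBG; right; exists t. Qed.

Lemma lam0 : q - q^-1 != 0. Proof. exact: lam_neq0. Qed.

Lemma GL_lf (a b : 'I_N) : GBp GL (lf a b).
Proof.
suff H : forall d (a b : 'I_N), (a - b <= d)%N -> GBp GL (lf a b) by apply: (H _ a b (leqnn _)).
elim=> [|d IH] {}a {}b hd.
  case: (ltngtP a b) => ab.
  - by rewrite (lfU Hskew Hgen ab); apply: GB0.
  - by move: hd; rewrite leqn0 subn_eq0 leqNgt ab.
  - by rewrite (ord_inj ab) (lf_K Hskew Hgen); apply: GL_K.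
case: (leqP (a - b) d) => hd'; first exact: IH.
have ba : (b < a)%N by rewrite -subn_gt0 (leq_ltn_trans _ hd').
have bn : (b < n.+1)%N by exact: leq_trans ba (ltn_ord a).
case: (eqVneq (a : nat) b.+1) => [ab|ab].
  pose t := Ordinal bn.
  have ht : hi t = a by apply: val_inj; rewrite /= hi_val ab.
  have lt : lo t = b by apply: val_inj; rewrite /= lo_val.
  have -> : lf a b = K a * E t.
    by rewrite /E ht lt mulrA (KKi Hq0 Hz) mul1r.
  by apply: GBM; [apply: GL_K | apply: GL_E].
have b1a : (b.+1 < a)%N by rewrite ltn_neqAle eq_sym ab ba.
have b1N : (b.+1 < N)%N by rewrite (ltn_trans b1a).
pose c : 'I_N := Ordinal b1N.
have bc : (b < c)%N by [].
have ca : (c < a)%N by [].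
have HX := relL4 Hskew Hdesc ca bc.
have -> : lf a b = (q - q^-1)^-1 *: (lf c b * lf a c - lf a c * lf c b) * Ki c.
  rewrite HX (lf_K Hskew Hgen) scalerA mulVf ?lam0 // scale1r -mulrA (KKi Hq0 Hz).
  by rewrite mulr1.
apply: GBM; last exact: GL_Ki.
apply: GBZ; apply: GBB; apply: GBM; apply: IH.
- by rewrite /=; lia.
- by rewrite /=; lia.
- by rewrite /=; lia.
- by rewrite /=; lia.
Qed.

Lemma mu_neq0 : mu q != 0.
Proof. by rewrite /mu invr_eq0 expf_neq0 // lam0. Qed.

Lemma GR_rf (a b : 'I_N) : GBp GR (rf a b).
Proof.
suff H : forall d (a b : 'I_N), (b - a <= d)%N -> GBp GR (rf a b) by apply: (H _ a b (leqnn _)).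
elim=> [|d IH] {}a {}b hd.
  case: (ltngtP a b) => ab.
  - by move: hd; rewrite leqn0 subn_eq0 leqNgt ab.
  - by rewrite (rfL Hskew Hgen ab); apply: GB0.
  - by rewrite (ord_inj ab) (rf_K Hskew Hgen); apply: GR_K.
case: (leqP (b - a) d) => hd'; first exact: IH.
have ab : (a < b)%N by rewrite -subn_gt0 (leq_ltn_trans _ hd').
have an : (a < n.+1)%N by exact: leq_trans ab (ltn_ord b).
case: (eqVneq (b : nat) a.+1) => [ba|ba].
  pose t := Ordinal an.
  have ht : hi t = b by apply: val_inj; rewrite /= hi_val ba.
  have lt : lo t = a by apply: val_inj; rewrite /= lo_val.
  have -> : rf a b = (mu q)^-1 *: (K a * F t).
    rewrite /F ht lt -scalerAr scalerA mulVf ?mu_neq0 // scale1r.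
    by rewrite mulrA (KKi Hq0 Hz) mul1r.
  by apply: GBZ; apply: GBM; [apply: GR_K | apply: GR_F].
have a1b : (a.+1 < b)%N by rewrite ltn_neqAle eq_sym ba ab.
have a1N : (a.+1 < N)%N by rewrite (ltn_trans a1b).
pose c : 'I_N := Ordinal a1N.
have ac : (a < c)%N by [].
have cb : (c < b)%N by [].
have HX := relR4 Hskew Hdesc ac cb.
have -> : rf a b = (q - q^-1)^-1 *: (rf c b * rf a c - rf a c * rf c b) * Ki c.
  rewrite HX (rf_K Hskew Hgen) scalerA mulVf ?lam0 // scale1r -mulrA (KKi Hq0 Hz).
  by rewrite mulr1.
apply: GBM; last exact: GR_Ki.
apply: GBZ; apply: GBB; apply: GBM; apply: IH.
- by rewrite /=; lia.
- by rewrite /=; lia.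
- by rewrite /=; lia.
- by rewrite /=; lia.
Qed.
End Gen.

Section HLR.
Variables (k : fieldType) (n : nat) (q z : k) (s : bf k n.+2).
Local Notation N := n.+2.
Hypothesis Hq0 : q != 0.
Hypothesis Hq2 : q ^+ 2 != 1.
Hypothesis Hz : z ^+ N = q^-1.
Hypothesis Hskew : skew_pairing s.
Hypothesis Hgen : sigma_gen q z s.
Hypothesis Hdesc : descends q s.
Local Notation word := (word N).
Local Notation dual := (dual k N).
Local Notation lf := (lf s).
Local Notation rf := (rf s).
Local Notation K := (K q z).
Local Notation Ki := (Ki q z).
Local Notation E := (E q z s).
Local Notation F := (F q z s).
Local Notation sL := (sL s).
Local Notation sR := (sR s).

Lemma sigL_sum (x : lincomb k N) : (sigL s x : dual) = \sum_(p <- x) p.1 *: sL p.2.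
Proof.
apply: funext => w; elim: x => [|p x IH]; first by rewrite /sigL !big_nil.
by rewrite /sigL big_cons -/(sigL s x w) IH big_cons dual_addE dual_scaleE.
Qed.
Lemma sigR_sum (x : lincomb k N) : (sigR s x : dual) = \sum_(p <- x) p.1 *: sR p.2.
Proof.
apply: funext => w; elim: x => [|p x IH]; first by rewrite /sigR !big_nil.
by rewrite /sigR big_cons -/(sigR s x w) IH big_cons dual_addE dual_scaleE.
Qed.

Definition HLp (f : dual) := exists x : lincomb k N, f = sigL s x.
Definition HRp (f : dual) := exists x : lincomb k N, f = sigR s x.

Lemma HL_sL u : HLp (sL u).
Proof. by exists [:: (1, u)]; rewrite sigL_sum big_cons big_nil addr0 scale1r. Qed.
Lemma HR_sR u : HRp (sR u).
Proof. by exists [:: (1, u)]; rewrite sigR_sum big_cons big_nil addr0 scale1r. Qed.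
Lemma HL0 : HLp 0. Proof. by exists [::]; rewrite sigL_sum big_nil. Qed.
Lemma HR0 : HRp 0. Proof. by exists [::]; rewrite sigR_sum big_nil. Qed.
Lemma HLD f g : HLp f -> HLp g -> HLp (f + g).
Proof. by move=> [x ->] [y ->]; exists (x ++ y); rewrite !sigL_sum big_cat. Qed.
Lemma HRD f g : HRp f -> HRp g -> HRp (f + g).
Proof. by move=> [x ->] [y ->]; exists (x ++ y); rewrite !sigR_sum big_cat. Qed.
Lemma HLZ c f : HLp f -> HLp (c *: f).
Proof.
move=> [x ->]; exists (lscale c x); rewrite !sigL_sum /lscale big_map scaler_sumr.
by apply: eq_bigr => p _; rewrite scalerA.
Qed.
Lemma HRZ c f : HRp f -> HRp (c *: f).
Proof.
move=> [x ->]; exists (lscale c x); rewrite !sigR_sum /lscale big_map scaler_sumr.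
by apply: eq_bigr => p _; rewrite scalerA.
Qed.
Lemma HLM f g : HLp f -> HLp g -> HLp (f * g).
Proof.
move=> [x ->] [y ->]; exists [seq (p.1 * p'.1, p'.2 ++ p.2) | p <- x, p' <- y].
rewrite !sigL_sum big_allpairs_dep mulr_suml; apply: eq_bigr => p _.
rewrite mulr_sumr; apply: eq_bigr => p' _.
by rewrite sL_cat // -scalerAl -scalerAr scalerA.
Qed.
Lemma HRM f g : HRp f -> HRp g -> HRp (f * g).
Proof.
move=> [x ->] [y ->]; exists [seq (p.1 * p'.1, p.2 ++ p'.2) | p <- x, p' <- y].
rewrite !sigR_sum big_allpairs_dep mulr_suml; apply: eq_bigr => p _.
rewrite mulr_sumr; apply: eq_bigr => p' _.
by rewrite sR_cat // -scalerAl -scalerAr scalerA.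
Qed.

Lemma HL_convprod (G : fn k N -> Prop) (l : seq (fn k N)) :
  (forall g, G g -> HLp g) -> Defs.allP G l -> HLp (convprod l).
Proof.
move=> HG; elim: l => [|g l IH] /=.
  by move=> _; rewrite -dual_oneE -(sL_nil Hskew); apply: HL_sL.
by move=> [Gg Gl]; rewrite -dual_mulE; apply: HLM; [apply: HG | apply: IH].
Qed.
Lemma HR_convprod (G : fn k N -> Prop) (l : seq (fn k N)) :
  (forall g, G g -> HRp g) -> Defs.allP G l -> HRp (convprod l).
Proof.
move=> HG; elim: l => [|g l IH] /=.
  by move=> _; rewrite -dual_oneE -(sR_nil Hskew); apply: HR_sR.
by move=> [Gg Gl]; rewrite -dual_mulE; apply: HRM; [apply: HG | apply: IH].
Qed.

Lemma HL_gsum (G : fn k N -> Prop) t :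
  (forall g, G g -> HLp g) -> Defs.allP (fun p => Defs.allP G p.2) t -> HLp (gsum t).
Proof.
move=> HG; elim: t => [|p t IH] /=; first by move=> _; rewrite /gsum big_nil; apply: HL0.
move=> [hp ht]; rewrite /gsum big_cons; apply: HLD; last exact: IH.
by apply: HLZ; apply: HL_convprod hp.
Qed.
Lemma HR_gsum (G : fn k N -> Prop) t :
  (forall g, G g -> HRp g) -> Defs.allP (fun p => Defs.allP G p.2) t -> HRp (gsum t).
Proof.
move=> HG; elim: t => [|p t IH] /=; first by move=> _; rewrite /gsum big_nil; apply: HR0.
move=> [hp ht]; rewrite /gsum big_cons; apply: HRD; last exact: IH.
by apply: HRZ; apply: HR_convprod hp.
Qed.

Lemma GL_HL g : GL q z s g -> HLp g.
Proof.
have e : forall f h : dual, f =1 h -> f = h by move=> f h /funext.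
case=> [[i [/e -> | /e ->]] | [t /e ->]].
- exact: HL_sL.
- by rewrite (Ki_sL Hq0 Hz Hskew Hgen); apply: HL_sL.
- rewrite /E (Ki_sL Hq0 Hz Hskew Hgen) -(sL1 s) -sL_cat //; exact: HL_sL.
Qed.

Lemma GR_HR g : GR q z s g -> HRp g.
Proof.
have e : forall f h : dual, f =1 h -> f = h by move=> f h /funext.
case=> [[i [/e -> | /e ->]] | [t /e ->]].
- have -> : (lfun s i i : dual) = rf i i by rewrite -[lfun s i i]/(lf i i) (lf_K Hskew Hgen) (rf_K Hskew Hgen).
  exact: HR_sR.
- by rewrite (Ki_sR Hq0 Hz Hskew Hgen); apply: HR_sR.
- rewrite /F (Ki_sR Hq0 Hz Hskew Hgen) -(sR1 s) -sR_cat //; apply: HRZ; exact: HR_sR.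
Qed.

Lemma sL_GL u : GBp (GL q z s) (sL u).
Proof.
elim: u => [|a u IH]; first by rewrite (sL_nil Hskew); apply: GB1.
rewrite -cat1s sL_cat //; apply: GBM => //.
by case: a => a b; rewrite sL1; apply: (GL_lf Hq0 Hq2 Hz Hskew Hgen Hdesc).
Qed.
Lemma sR_GR u : GBp (GR q z s) (sR u).
Proof.
elim: u => [|a u IH]; first by rewrite (sR_nil Hskew); apply: GB1.
rewrite -cat1s sR_cat //; apply: GBM => //.
by case: a => a b; rewrite sR1; apply: (GR_rf Hq0 Hq2 Hz Hskew Hgen Hdesc).
Qed.

Lemma genL (f : fn k N) : (exists x, f =1 sigL s x) <-> gen_by (GL q z s) f.
Proof.
split.
  move=> [x /funext ->]; rewrite sigL_sum; elim: x => [|p x IH].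
    by rewrite big_nil; apply: GB0.
  by rewrite big_cons; apply: GBD => //; apply: GBZ; apply: sL_GL.
move=> /GB_sum[t [ht ->]]; have [x ->] := HL_gsum GL_HL ht.
by exists x.
Qed.

Lemma genR (f : fn k N) : (exists x, f =1 sigR s x) <-> gen_by (GR q z s) f.
Proof.
split.
  move=> [x /funext ->]; rewrite sigR_sum; elim: x => [|p x IH].
    by rewrite big_nil; apply: GB0.
  by rewrite big_cons; apply: GBD => //; apply: GBZ; apply: sR_GR.
move=> /GB_sum[t [ht ->]]; have [x ->] := HR_gsum GR_HR ht.
by exists x.
Qed.
End HLR.

Theorem proposition4p3 (k : fieldType) (n : nat) (q z : k)
    (sigma : word n.+2 -> word n.+2 -> k) :
  q != 0 -> q ^+ 2 != 1 -> z ^+ n.+2 = q^-1 -> CQT q z sigma ->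
  (forall i : 'I_n.+2, lfun sigma i i =1 rfun sigma i i) /\
  exists Kinv : 'I_n.+2 -> fn k n.+2,
    let K (i : 'I_n.+2) := lfun sigma i i in
    let E (s : 'I_n.+1) : fn k n.+2 :=
      conv (Kinv (inord s.+1)) (lfun sigma (inord s.+1) (inord s)) in
    let F (s : 'I_n.+1) : fn k n.+2 := fun w =>
      (q - q^-1) ^- 2 * conv (Kinv (inord s)) (rfun sigma (inord s) (inord s.+1)) w in
    (forall i, finite_dual q (K i) /\ grouplike (K i) /\ finite_dual q (Kinv i) /\
               conv (K i) (Kinv i) =1 eps /\ conv (Kinv i) (K i) =1 eps) /\
    (* H_l is generated as an algebra by the K_i^{+-1} and the E_s *)
    (forall f : fn k n.+2, (exists x, f =1 sigL sigma x) <->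
       gen_by (fun g => (exists i, g =1 K i \/ g =1 Kinv i) \/ exists s, g =1 E s) f) /\
    (* H_r is generated as an algebra by the K_i^{+-1} and the F_s *)
    (forall f : fn k n.+2, (exists x, f =1 sigR sigma x) <->
       gen_by (fun g => (exists i, g =1 K i \/ g =1 Kinv i) \/ exists s, g =1 F s) f) /\
    (forall i j, conv (K i) (K j) =1 conv (K j) (K i)) /\
    convprod [seq K i | i <- enum 'I_n.+2] =1 eps /\
    (forall (i : 'I_n.+2) (t : 'I_n.+1), convprod [:: K i; E t; Kinv i] =1
       (fun w => q ^ ((i == inord t :> 'I_n.+2)%:Z - (i == inord t.+1 :> 'I_n.+2)%:Z)
                 * E t w)) /\
    (forall s t : 'I_n.+1, (s.+1 < t)%N || (t.+1 < s)%N ->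
       conv (E t) (E s) =1 conv (E s) (E t)) /\
    (forall s t : 'I_n.+1, (s.+1 == t)%N || (t.+1 == s)%N -> forall w,
       convprod [:: E s; E s; E t] w - (q + q^-1) * convprod [:: E s; E t; E s] w
       + convprod [:: E t; E s; E s] w = 0) /\
    (forall (i : 'I_n.+2) (t : 'I_n.+1), convprod [:: K i; F t; Kinv i] =1
       (fun w => q ^ ((i == inord t.+1 :> 'I_n.+2)%:Z - (i == inord t :> 'I_n.+2)%:Z)
                 * F t w)) /\
    (forall s t : 'I_n.+1, (s.+1 < t)%N || (t.+1 < s)%N ->
       conv (F t) (F s) =1 conv (F s) (F t)) /\
    (forall s t : 'I_n.+1, (s.+1 == t)%N || (t.+1 == s)%N -> forall w,
       convprod [:: F s; F s; F t] w - (q + q^-1) * convprod [:: F s; F t; F s] w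
       + convprod [:: F t; F s; F s] w = 0).

Proof.
move=> Hq0 Hq2 Hz [Hdesc [Hskew [_ [_ Hgen]]]].
have lK : forall i, (lfun sigma i i : dual k n.+2) = K q z i.
  by move=> i; exact: (lf_K Hskew Hgen).
split.
  move=> i w; change (lf sigma i i w = rf sigma i i w).
  by rewrite (lf_K Hskew Hgen) (rf_K Hskew Hgen).
exists (Ki q z) => K0 E0 F0.
split.
  move=> i; rewrite /K0.
  have mK : grouplike (lfun sigma i i).
    split; first by rewrite lK /K chr_nil.
    by move=> u v; rewrite lK /K chr_cat.
  split.
    by apply: fd_mult; [exact: Hdesc.1 | exact: mK.1 | exact: mK.2].
  split => //.
  split.
    apply: fd_mult.
    - by rewrite (Ki_sL Hq0 Hz Hskew Hgen); exact: Hdesc.1.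
    - by rewrite /Ki chr_nil.
    - by move=> u v; rewrite /Ki chr_cat.
  split => w.
    by rewrite -[conv _ _]/((lfun sigma i i : dual k n.+2) * Ki q z i) lK (KKi Hq0 Hz).
  by rewrite -[conv _ _]/(Ki q z i * (lfun sigma i i : dual k n.+2)) lK (KiK Hq0 Hz).
split.
  move=> f; exact: (genL Hq0 Hq2 Hz Hskew Hgen Hdesc f).
split.
  move=> f; exact: (genR Hq0 Hq2 Hz Hskew Hgen Hdesc f).
have ev : forall f g : dual k n.+2, f = g -> f =1 g by move=> f g ->.
have ordF : forall (a b : 'I_n.+2), (a : nat) = b.+1 -> (a == b) = false.
  by move=> a b ab; apply/negbTE; rewrite -(inj_eq val_inj) /= ab neq_ltn ltnSn orbT.
split.
  move=> i j; apply: ev; rewrite /K0.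
  change ((lfun sigma i i : dual k n.+2) * (lfun sigma j j : dual k n.+2)
     = (lfun sigma j j : dual k n.+2) * (lfun sigma i i : dual k n.+2)).
  by rewrite !lK; exact: KC.
split.
  apply: ev; rewrite /K0.
  have -> : [seq lfun sigma i i | i <- enum 'I_n.+2] = [seq K q z i | i <- enum 'I_n.+2].
    by apply: eq_map => i; exact: lK.
  exact: (prodK Hq0 Hz).
split.
  move=> i t w; rewrite /K0 /E0.
  have := KE Hq0 Hz Hskew Hgen Hdesc i t.
  rewrite -lK (qpow q) => [H|]; last first.
    by apply/negP => /andP[/eqP -> /eqP h]; move: (lohi_neq t); rewrite /lo /hi h eqxx.
  exact: (congr1 (fun f : dual k n.+2 => f w) H).
split.
  move=> s t /orP[st|ts]; apply: ev; rewrite /E0.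
  - exact: (EEc Hq0 Hz Hskew Hgen Hdesc st).
  - exact: (esym (EEc Hq0 Hz Hskew Hgen Hdesc ts)).
split.
  move=> s t /orP[/eqP st|/eqP ts] w; rewrite /E0.
  - have H := (serreE Hq0 Hz Hskew Hgen Hdesc (esym st)).1.
    exact: (congr1 (fun f : dual k n.+2 => f w) H).
  - have H := (serreE Hq0 Hz Hskew Hgen Hdesc (esym ts)).2.
    exact: (congr1 (fun f : dual k n.+2 => f w) H).
split.
  move=> i t w; rewrite /K0 /F0.
  have := KF Hq0 Hz Hskew Hgen Hdesc i t.
  rewrite -lK (qpow q) => [H|]; last first.
    by apply/negP => /andP[/eqP -> /eqP h]; move: (lohi_neq t); rewrite /lo /hi h eqxx.
  exact: (congr1 (fun f : dual k n.+2 => f w) H).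
split.
  move=> s t /orP[st|ts]; apply: ev; rewrite /F0.
  - exact: (FFc Hq0 Hz Hskew Hgen Hdesc st).
  - exact: (esym (FFc Hq0 Hz Hskew Hgen Hdesc ts)).
move=> s t /orP[/eqP st|/eqP ts] w; rewrite /F0.
- have H := (serreF Hq0 Hz Hskew Hgen Hdesc (esym st)).1.
  exact: (congr1 (fun f : dual k n.+2 => f w) H).
- have H := (serreF Hq0 Hz Hskew Hgen Hdesc (esym ts)).2.
  exact: (congr1 (fun f : dual k n.+2 => f w) H).
Qed.
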